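(* Let $K_n$ ($n\ge1$) and $K$ be unconstrained Sierpinski carpets with the same $k,N$, generated by $\{\Psi_{n,i}\}_{i=1}^N$ and $\{\Psi_i\}_{i=1}^N$ and indexed so that $\Psi_{n,i}\to\Psi_i$, and assume $K_n\to K$ in the Hausdorff metric and that the geodesic metrics $d_{G,n}$ on $K_n$, $n\ge1$, are equicontinuous. Then there exists $C>0$ depending on $K$ such that $\limsup_{n\to\infty}d_{G,n}(x_n,y_n)\le C\,d_G(x,y)$ for any $x,y\in K$ and $x_n,y_n\in K_n$ with $x_n\to x$, $y_n\to y$, where $d_G$ is the geodesic metric on $K$.
   Context: USC: integers $k\ge3$, $4(k-1)\le N\le k^2-1$; maps $\Psi_i(x)=x/k+c_i$ on $\square=[0,1]^2$ with pairwise intersections of the $\Psi_i(\square)$ a segment, point or empty, $\bigcup_i\Psi_i(\square)$ connected and invariant under the 8 isometries of $\square$, $[0,1]\times\{0\}\subset\bigcup_i\Psi_i(\square)\subset\square$; $K=\bigcup_i\Psi_iK$. Geodesic metric: infimum of lengths of rectifiable curves in the set joining the points. Equicontinuity of $d_{G,n}$: $\lim_{\eta\to0}\sup_n\sup\{|d_{G,n}(p)-d_{G,n}(p')|:p,p'\in K_n\times K_n,|p-p'|<\eta\}=0$ (Euclidean norm in $\mathbb{R}^4$). *)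

(* Defs.v *)
From Stdlib Require Import Reals Lra.
From Coquelicot Require Import Coquelicot.
Open Scope R_scope.

Definition pt : Type := (R * R)%type.

Definition dist2 (p q : pt) : R :=
  sqrt ((fst p - fst q) ^ 2 + (snd p - snd q) ^ 2).

Definition dist4 (p p' q q' : pt) : R :=
  sqrt ((fst p - fst q) ^ 2 + (snd p - snd q) ^ 2
        + (fst p' - fst q') ^ 2 + (snd p' - snd q') ^ 2).

Definition unit_square (p : pt) : Prop :=
  0 <= fst p <= 1 /\ 0 <= snd p <= 1.

Definition Psi (k : nat) (c : pt) (x : pt) : pt :=
  (fst x / INR k + fst c, snd x / INR k + snd c).

Definition image (f : pt -> pt) (A : pt -> Prop) (p : pt) : Prop :=
  exists x, A x /\ p = f x.

Definition segment (a b : pt) (p : pt) : Prop :=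
  exists t, 0 <= t <= 1 /\
    p = (fst a + t * (fst b - fst a), snd a + t * (snd b - snd a)).

Definition set_eq (A B : pt -> Prop) : Prop := forall p, A p <-> B p.

Definition seg_point_or_empty (A : pt -> Prop) : Prop :=
  set_eq A (fun _ => False) \/
  (exists a, set_eq A (fun p => p = a)) \/
  (exists a b, set_eq A (segment a b)).

Definition open2 (U : pt -> Prop) : Prop :=
  forall p, U p -> exists e, 0 < e /\ forall q, dist2 p q < e -> U q.

Definition connected2 (A : pt -> Prop) : Prop :=
  ~ (exists U V, open2 U /\ open2 V /\
       (forall p, A p -> U p \/ V p) /\
       (exists p, A p /\ U p) /\ (exists p, A p /\ V p) /\
       (forall p, A p -> U p -> V p -> False)).

Definition closed2 (A : pt -> Prop) : Prop :=
  forall p, (forall e, 0 < e -> exists q, A q /\ dist2 p q < e) -> A p.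

Definition bounded2 (A : pt -> Prop) : Prop :=
  exists M, forall p, A p -> dist2 p (0, 0) <= M.

Definition D4 : list (pt -> pt) :=
  (fun p => (fst p, snd p)) :: (fun p => (1 - fst p, snd p)) ::
  (fun p => (fst p, 1 - snd p)) :: (fun p => (1 - fst p, 1 - snd p)) ::
  (fun p => (snd p, fst p)) :: (fun p => (1 - snd p, fst p)) ::
  (fun p => (snd p, 1 - fst p)) :: (fun p => (1 - snd p, 1 - fst p)) :: nil.

Definition invariant_under (g : pt -> pt) (A : pt -> Prop) : Prop :=
  set_eq (image g A) A.

Definition cell (k : nat) (c : nat -> pt) (i : nat) : pt -> Prop :=
  image (Psi k (c i)) unit_square.

Definition first_level (k N : nat) (c : nat -> pt) (p : pt) : Prop :=
  exists i, (i < N)%nat /\ cell k c i p.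

(** Unconstrained Sierpinski carpet with parameters k, N, translation
    vectors c_0..c_{N-1}, and attractor K (nonempty compact, K = U Psi_i K). *)
Definition is_USC (k N : nat) (c : nat -> pt) (K : pt -> Prop) : Prop :=
  (3 <= k)%nat /\ (4 * (k - 1) <= N)%nat /\ (N <= k * k - 1)%nat /\
  (forall i j, (i < N)%nat -> (j < N)%nat -> i <> j ->
     seg_point_or_empty (fun p => cell k c i p /\ cell k c j p)) /\
  connected2 (first_level k N c) /\
  (forall g, List.In g D4 -> invariant_under g (first_level k N c)) /\
  (forall x, 0 <= x <= 1 -> first_level k N c (x, 0)) /\
  (forall p, first_level k N c p -> unit_square p) /\
  (exists p, K p) /\ closed2 K /\ bounded2 K /\
  set_eq K (fun p => exists i, (i < N)%nat /\ image (Psi k (c i)) K p).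

(** Curves: gamma restricted to [0,1], continuous there, valued in A. *)
Definition curve_in (A : pt -> Prop) (x y : pt) (g : R -> pt) : Prop :=
  g 0 = x /\ g 1 = y /\
  (forall t, 0 <= t <= 1 -> A (g t)) /\
  (forall t, 0 <= t <= 1 -> forall e, 0 < e -> exists d, 0 < d /\
     forall s, 0 <= s <= 1 -> Rabs (s - t) < d -> dist2 (g s) (g t) < e).

Fixpoint poly_sum (g : R -> pt) (t : nat -> R) (m : nat) : R :=
  match m with
  | O => 0
  | S m' => poly_sum g t m' + dist2 (g (t m')) (g (t (S m')))
  end.

Definition curve_length (g : R -> pt) : Rbar :=
  Lub_Rbar (fun s => exists (m : nat) (t : nat -> R),
    t O = 0 /\ t m = 1 /\ (forall j, (j < m)%nat -> t j < t (S j)) /\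
    s = poly_sum g t m).

(** Geodesic metric on A: infimum of the lengths of rectifiable curves in A
    joining x and y (+oo if there is none). *)
Definition geodist (A : pt -> Prop) (x y : pt) : Rbar :=
  Glb_Rbar (fun L => exists g, curve_in A x y g /\ curve_length g = Finite L).

Definition pt_conv (u : nat -> pt) (l : pt) : Prop :=
  forall e, 0 < e -> exists M, forall n, (M <= n)%nat -> dist2 (u n) l < e.

(** Convergence in the Hausdorff metric (d_H(A_n, A) -> 0). *)
Definition hausdorff_conv (An : nat -> pt -> Prop) (A : pt -> Prop) : Prop :=
  forall e, 0 < e -> exists M, forall n, (M <= n)%nat ->
    (forall p, An n p -> exists q, A q /\ dist2 p q < e) /\
    (forall q, A q -> exists p, An n p /\ dist2 p q < e).

(** Equicontinuity of the (real-valued) geodesic metrics d_{G,n} on K_n x K_n. *)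
Definition geodist_equicont (Kn : nat -> pt -> Prop) : Prop :=
  forall e, 0 < e -> exists eta, 0 < eta /\
    forall n x y x' y', Kn n x -> Kn n y -> Kn n x' -> Kn n y' ->
      dist4 x y x' y' < eta ->
      exists a b, geodist (Kn n) x y = Finite a /\
                  geodist (Kn n) x' y' = Finite b /\ Rabs (a - b) <= e.

(* Main.v *)
Require Import Defs.
From Stdlib Require Import Reals Lra List Lia Arith.
From Stdlib Require Import Rgeom Classical ClassicalEpsilon.
From Coquelicot Require Import Coquelicot.
Open Scope R_scope.

Lemma dist2_sym p q : dist2 p q = dist2 q p.
Proof. unfold dist2. f_equal. ring. Qed.

Lemma dist2_nonneg p q : 0 <= dist2 p q.
Proof. unfold dist2. apply sqrt_pos. Qed.

Lemma dist2_refl p : dist2 p p = 0.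
Proof. unfold dist2. replace ((fst p - fst p) ^ 2 + (snd p - snd p) ^ 2) with 0 by ring.
  apply sqrt_0. Qed.

Lemma dist2_tri p q r : dist2 p r <= dist2 p q + dist2 q r.
Proof.
  destruct p as [a b]; destruct q as [c d]; destruct r as [e f].
  pose proof (triangle a b e f c d) as H. unfold dist_euc, Rsqr in H.
  unfold dist2; simpl. rewrite !Rmult_1_r.
  exact H.
Qed.

Lemma coord1_le p q : Rabs (fst p - fst q) <= dist2 p q.
Proof.
  unfold dist2. rewrite <- sqrt_Rsqr_abs. apply sqrt_le_1_alt.
  unfold Rsqr. pose proof (pow2_ge_0 (snd p - snd q)). simpl. lra.
Qed.

Lemma coord2_le p q : Rabs (snd p - snd q) <= dist2 p q.
Proof.
  unfold dist2. rewrite <- sqrt_Rsqr_abs. apply sqrt_le_1_alt.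
  unfold Rsqr. pose proof (pow2_ge_0 (fst p - fst q)). simpl. lra.
Qed.

Lemma dist2_le_coords p q : dist2 p q <= Rabs (fst p - fst q) + Rabs (snd p - snd q).
Proof.
  unfold dist2.
  pose proof (Rabs_pos (fst p - fst q)); pose proof (Rabs_pos (snd p - snd q)).
  rewrite <- (sqrt_pow2 (Rabs (fst p - fst q) + Rabs (snd p - snd q))) by lra.
  apply sqrt_le_1_alt.
  rewrite <- (pow2_abs (fst p - fst q)). rewrite <- (pow2_abs (snd p - snd q)).
  assert (0 <= Rabs (fst p - fst q) * Rabs (snd p - snd q)) by (apply Rmult_le_pos; auto).
  simpl. lra.
Qed.

Lemma dist2_scale r a b c d : 0 <= r ->
  sqrt ((r * a - r * c) ^ 2 + (r * b - r * d) ^ 2) = r * sqrt ((a - c) ^ 2 + (b - d) ^ 2).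
Proof.
  intros Hr.
  replace ((r * a - r * c) ^ 2 + (r * b - r * d) ^ 2) with ((r*r) * ((a - c) ^ 2 + (b - d) ^ 2)) by ring.
  rewrite sqrt_mult_alt. 2: { pose proof (pow2_ge_0 (a-c)); pose proof (pow2_ge_0 (b-d)).
    assert (0 <= r*r) by (apply Rmult_le_pos; auto). apply Rmult_le_pos; lra. } rewrite sqrt_square; auto.
Qed.

Lemma dist2_Psi k c p q : (0 < k)%nat -> dist2 (Psi k c p) (Psi k c q) = dist2 p q / INR k.
Proof.
  intros Hk. assert (HK : 0 < INR k) by (apply lt_0_INR; auto).
  unfold dist2, Psi; cbn [fst snd].
  replace ((fst p / INR k + fst c - (fst q / INR k + fst c)) ^ 2 +
           (snd p / INR k + snd c - (snd q / INR k + snd c)) ^ 2)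
    with (((/ INR k) * fst p - (/ INR k) * fst q) ^ 2 + ((/ INR k) * snd p - (/ INR k) * snd q) ^ 2).
  2: { unfold Rdiv. ring. }
  rewrite dist2_scale. 2: { left; apply Rinv_0_lt_compat; auto. } unfold Rdiv. ring.
Qed.

Lemma dist2_square_le p q : unit_square p -> unit_square q -> dist2 p q <= 2.
Proof.
  intros [[? ?] [? ?]] [[? ?] [? ?]]. eapply Rle_trans. apply dist2_le_coords.
  assert (Rabs (fst p - fst q) <= 1) by (apply Rabs_le; lra).
  assert (Rabs (snd p - snd q) <= 1) by (apply Rabs_le; lra). lra.
Qed.

Definition partition (t : nat -> R) (m : nat) : Prop :=
  t O = 0 /\ t m = 1 /\ (forall j, (j < m)%nat -> t j < t (S j)).

Lemma len_ub g L t m : curve_length g = Finite L -> partition t m -> poly_sum g t m <= L.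
Proof.
  intros HL [H0 [H1 H2]].
  pose proof (Lub_Rbar_correct (fun s => exists (m : nat) (t : nat -> R),
    t O = 0 /\ t m = 1 /\ (forall j, (j < m)%nat -> t j < t (S j)) /\
    s = poly_sum g t m)) as [Hub _].
  unfold curve_length in HL. rewrite HL in Hub.
  apply (Hub (poly_sum g t m)). exists m, t. auto.
Qed.

Lemma len_le g B : (forall t m, partition t m -> poly_sum g t m <= B) ->
  Rbar_le (curve_length g) (Finite B).
Proof.
  intros H. unfold curve_length.
  pose proof (Lub_Rbar_correct (fun s => exists (m : nat) (t : nat -> R),
    t O = 0 /\ t m = 1 /\ (forall j, (j < m)%nat -> t j < t (S j)) /\
    s = poly_sum g t m)) as [_ Hl].
  apply Hl. intros x [m [t [H0 [H1 [H2 ->]]]]]. simpl. apply H. split; auto.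
Qed.

Lemma poly_sum_nonneg g t m : 0 <= poly_sum g t m.
Proof. induction m; simpl. lra. pose proof (dist2_nonneg (g (t m)) (g (t (S m)))). lra. Qed.

Lemma poly_sum_split g t a b :
  poly_sum g t (a + b) = poly_sum g t a + poly_sum g (fun j => t (a + j)%nat) b.
Proof.
  induction b; simpl. rewrite Nat.add_0_r. ring.
  rewrite Nat.add_succ_r. simpl. rewrite IHb. ring.
Qed.

Lemma poly_sum_ext g t t' m : (forall j, (j <= m)%nat -> t j = t' j) ->
  poly_sum g t m = poly_sum g t' m.
Proof.
  induction m; intros H; simpl. auto.
  rewrite IHm by (intros; apply H; lia). rewrite (H m), (H (S m)) by lia. auto.
Qed.

Lemma poly_sum_ext_g g g' t m : (forall j, (j <= m)%nat -> g (t j) = g' (t j)) ->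
  poly_sum g t m = poly_sum g' t m.
Proof.
  induction m; intros H; simpl. auto.
  rewrite IHm by (intros; apply H; lia). rewrite (H m), (H (S m)) by lia. auto.
Qed.

Lemma poly_sum_comp g f t m : poly_sum (fun s => g (f s)) t m = poly_sum g (fun j => f (t j)) m.
Proof. induction m; simpl; auto. rewrite IHm. auto. Qed.

Lemma len_nonneg g L : curve_length g = Finite L -> 0 <= L.
Proof.
  intros HL. assert (H := len_ub g L (fun j => match j with O => 0 | _ => 1 end) 1 HL).
  assert (poly_sum g (fun j => match j with O => 0 | _ => 1 end) 1 <= L).
  { apply H. split; [auto|split; auto]. intros j Hj. assert (j = O) by lia. subst. lra. }
  pose proof (poly_sum_nonneg g (fun j => match j with O => 0 | _ => 1 end) 1). lra.
Qed.

Lemma len_chord g L t : curve_length g = Finite L -> 0 <= t <= 1 -> dist2 (g 0) (g t) <= L.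
Proof.
  intros HL Ht.
  destruct (Req_dec t 0) as [->|H0]. rewrite dist2_refl. eapply len_nonneg; eauto.
  destruct (Req_dec t 1) as [->|H1].
  - set (u := fun j : nat => match j with O => 0 | _ => 1 end).
    assert (poly_sum g u 1 <= L).
    { apply len_ub; auto. split; [auto|split; auto]. intros j Hj. assert (j = O) by lia. subst. unfold u; lra. }
    simpl in H. rewrite Rplus_0_l in H. exact H.
  - set (u := fun j : nat => match j with O => 0 | 1%nat => t | _ => 1 end).
    assert (poly_sum g u 2 <= L).
    { apply len_ub; auto. split; [auto|split; auto]. intros j Hj.
      destruct j as [|[|]]; unfold u; try lra. lia. }
    simpl in H. pose proof (dist2_nonneg (g t) (g 1)). lra.
Qed.

Lemma incr_le (t : nat -> R) m : (forall j, (j < m)%nat -> t j < t (S j)) ->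
  forall i j, (i <= j <= m)%nat -> t i <= t j.
Proof.
  intros H i j Hij. induction j.
  - assert (i = O) by lia. subst. lra.
  - destruct (Nat.eq_dec i (S j)). subst; lra.
    assert (t i <= t j) by (apply IHj; lia). specialize (H j). assert (j < m)%nat by lia.
    specialize (H H1). lra.
Qed.

Lemma find_cross (t : nat -> R) m a : t O <= a -> a < t m ->
  exists j, (j < m)%nat /\ t j <= a /\ a < t (S j).
Proof.
  induction m; intros H0 H1. lra.
  destruct (Rle_dec (t m) a).
  - exists m. split; [lia|split; auto].
  - destruct IHm as [j [? [? ?]]]; auto. lra. exists j. split; [lia|auto].
Qed.

Definition concat (g1 g2 : R -> pt) (t : R) : pt :=
  if Rle_dec t (1/2) then g1 (2 * t) else g2 (2 * t - 1).

Lemma concat_len g1 g2 L1 L2 :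
  curve_length g1 = Finite L1 -> curve_length g2 = Finite L2 -> g1 1 = g2 0 ->
  Rbar_le (curve_length (concat g1 g2)) (Finite (L1 + L2)).
Proof.
  intros H1 H2 Hj. apply len_le. intros t m [T0 [T1 Tinc]].
  destruct (find_cross t m (1/2)) as [j [Hjm [Htj Htj1]]]. lra. lra.
  set (b := (m - S j)%nat).
  assert (Hb : (j + S b = m)%nat) by (unfold b; lia).
  replace m with (j + (1 + b))%nat by lia.
  rewrite poly_sum_split.
  rewrite (poly_sum_split (concat g1 g2) (fun j0 => t (j + j0)%nat) 1 b).
  change (poly_sum (concat g1 g2) (fun j0 : nat => t (j + j0)%nat) 1) with
    (0 + dist2 (concat g1 g2 (t (j + 0)%nat)) (concat g1 g2 (t (j + 1)%nat))).
  rewrite Rplus_0_l.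
  rewrite Nat.add_0_r.
  assert (E1 : poly_sum (concat g1 g2) t j = poly_sum g1 (fun i => 2 * t i) j).
  { rewrite <- (poly_sum_comp g1 (fun s => 2 * s)). apply poly_sum_ext_g.
    intros i Hi. unfold concat. destruct (Rle_dec (t i) (1/2)); auto.
    exfalso. assert (t i <= t j) by (apply (incr_le t m); auto; lia). lra. }
  assert (E3 : poly_sum (concat g1 g2) (fun j0 => t (j + (1 + j0))%nat) b =
               poly_sum g2 (fun i => 2 * t (j + (1 + i))%nat - 1) b).
  { rewrite <- (poly_sum_comp g2 (fun s => 2 * s - 1)). apply poly_sum_ext_g.
    intros i Hi. unfold concat. destruct (Rle_dec (t (j + (1 + i))%nat) (1/2)); auto.
    exfalso. assert (t (S j) <= t (j + (1 + i))%nat) by (apply (incr_le t m); auto; lia). lra. }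
  rewrite E1, E3.
  replace (j + 1)%nat with (S j) by lia.
  assert (E2 : concat g1 g2 (t j) = g1 (2 * t j)) by (unfold concat; destruct (Rle_dec (t j) (1/2)); auto; lra).
  assert (E2' : concat g1 g2 (t (S j)) = g2 (2 * t (S j) - 1)) by (unfold concat; destruct (Rle_dec (t (S j)) (1/2)); auto; lra).
  rewrite E2, E2'.
  assert (Tri : dist2 (g1 (2 * t j)) (g2 (2 * t (S j) - 1)) <=
                dist2 (g1 (2 * t j)) (g1 1) + dist2 (g2 0) (g2 (2 * t (S j) - 1))).
  { rewrite Hj. apply dist2_tri. }
  assert (A : poly_sum g1 (fun i => 2 * t i) j + dist2 (g1 (2 * t j)) (g1 1) <= L1).
  { destruct (Req_dec (2 * t j) 1) as [Ee|Ne].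
    - rewrite Ee, dist2_refl, Rplus_0_r. apply len_ub; auto. split; [rewrite T0; ring|split; auto].
      intros i Hi. assert (t i < t (S i)) by (apply Tinc; lia). lra.
    - set (u := fun i => if le_lt_dec i j then 2 * t i else 1).
      assert (poly_sum g1 u (S j) <= L1).
      { apply len_ub; auto. split; [|split].
        - unfold u; destruct (le_lt_dec 0 j); [rewrite T0; ring|lia].
        - unfold u; destruct (le_lt_dec (S j) j); [lia|auto].
        - intros i Hi. unfold u. destruct (le_lt_dec i j); [|lia].
          destruct (le_lt_dec (S i) j).
          + assert (t i < t (S i)) by (apply Tinc; lia). lra.
          + assert (Eij : i = j) by lia. rewrite Eij. lra. }
      simpl in H. unfold u at 2 3 in H.
      destruct (le_lt_dec j j); [|lia]. destruct (le_lt_dec (S j) j); [lia|].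
      rewrite (poly_sum_ext g1 u (fun i => 2 * t i)) in H. auto.
      intros i Hi. unfold u. destruct (le_lt_dec i j); auto; lia. }
  assert (B : dist2 (g2 0) (g2 (2 * t (S j) - 1)) +
              poly_sum g2 (fun i => 2 * t (j + (1 + i))%nat - 1) b <= L2).
  { set (v := fun i => match i with O => 0 | S i' => 2 * t (j + (1 + i'))%nat - 1 end).
    assert (poly_sum g2 v (1 + b) <= L2).
    { apply len_ub; auto. split; [|split].
      - auto.
      - simpl. replace (j + S b)%nat with m by lia. rewrite T1. ring.
      - intros i Hi. destruct i; simpl.
        + replace (j+1)%nat with (S j) by lia. lra.
        + assert (t (j + S i)%nat < t (S (j + S i))) by (apply Tinc; lia).
          replace (j + S (S i))%nat with (S (j + S i)) by lia. lra. }
    rewrite poly_sum_split in H. simpl (poly_sum g2 v 1) in H. replace (j + 1)%nat with (S j) in H by lia.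
    rewrite (poly_sum_ext g2 (fun j0 => v (1 + j0)%nat) (fun i => 2 * t (j + (1 + i))%nat - 1)) in H.
    lra. intros i Hi. unfold v. simpl. auto. }
  lra.
Qed.

Lemma concat_curve A x y z g1 g2 : curve_in A x y g1 -> curve_in A y z g2 ->
  curve_in A x z (concat g1 g2).
Proof.
  intros [G10 [G11 [G1A G1c]]] [G20 [G21 [G2A G2c]]].
  split; [|split; [|split]].
  - unfold concat. destruct (Rle_dec 0 (1/2)); [|lra]. rewrite Rmult_0_r. auto.
  - unfold concat. destruct (Rle_dec 1 (1/2)); [lra|]. replace (2*1-1) with 1 by ring. auto.
  - intros t Ht. unfold concat. destruct (Rle_dec t (1/2)).
    + apply G1A. lra.
    + apply G2A. lra.
  - intros t Ht e He.
    destruct (Rlt_le_dec t (1/2)) as [Hlt|Hge].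
    + destruct (G1c (2*t) ltac:(lra) e He) as [d [Hd Hc]].
      exists (Rmin (d/2) (1/2 - t)). split. apply Rmin_pos; lra.
      intros s Hs Hst. pose proof (Rmin_l (d/2) (1/2 - t)). pose proof (Rmin_r (d/2) (1/2 - t)).
      apply Rabs_def2 in Hst. unfold concat.
      destruct (Rle_dec s (1/2)); [|lra]. destruct (Rle_dec t (1/2)); [|lra].
      apply Hc. lra. apply Rabs_def1; lra.
    + destruct (Req_dec t (1/2)) as [Eq|Ne].
      * subst t.
        destruct (G1c 1 ltac:(lra) e He) as [d1 [Hd1 Hc1]].
        destruct (G2c 0 ltac:(lra) e He) as [d2 [Hd2 Hc2]].
        exists (Rmin d1 d2 / 2). split. assert (0 < Rmin d1 d2) by (apply Rmin_glb_lt; auto). lra.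
        intros s Hs Hst. pose proof (Rmin_l d1 d2). pose proof (Rmin_r d1 d2).
        apply Rabs_def2 in Hst. unfold concat.
        destruct (Rle_dec (1/2) (1/2)); [|lra]. replace (2 * (1/2)) with 1 by field.
        destruct (Rle_dec s (1/2)).
        -- apply Hc1. lra. apply Rabs_def1; lra.
        -- rewrite G11, <- G20. apply Hc2. lra. apply Rabs_def1; lra.
      * destruct (G2c (2*t-1) ltac:(lra) e He) as [d [Hd Hc]].
        exists (Rmin (d/2) (t - 1/2)). split. apply Rmin_pos; lra.
        intros s Hs Hst. pose proof (Rmin_l (d/2) (t - 1/2)). pose proof (Rmin_r (d/2) (t - 1/2)).
        apply Rabs_def2 in Hst. unfold concat.
        destruct (Rle_dec s (1/2)); [lra|]. destruct (Rle_dec t (1/2)); [lra|].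
        apply Hc. lra. apply Rabs_def1; lra.
Qed.

Definition LenSet A x y := (fun L => exists g, curve_in A x y g /\ curve_length g = Finite L).

Lemma geo_le_curve A p q g L : curve_in A p q g -> curve_length g = Finite L ->
  Rbar_le (geodist A p q) (Finite L).
Proof.
  intros Hc HL. unfold geodist. destruct (Glb_Rbar_correct (LenSet A p q)) as [Hlb _].
  apply Hlb. exists g. auto.
Qed.

Lemma geo_le_curve' A p q g B : curve_in A p q g -> Rbar_le (curve_length g) (Finite B) ->
  Rbar_le (geodist A p q) (Finite B).
Proof.
  intros Hc HL. destruct (curve_length g) as [L| |] eqn:E; simpl in HL; try contradiction.
  - eapply Rbar_le_trans. eapply geo_le_curve; eauto. simpl; auto.
  - exfalso. (* length is >= 0 so not m_infty *)
    unfold curve_length in E.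
    destruct (Lub_Rbar_correct (fun s => exists (m : nat) (t : nat -> R),
      t O = 0 /\ t m = 1 /\ (forall j, (j < m)%nat -> t j < t (S j)) /\
      s = poly_sum g t m)) as [Hub _]. rewrite E in Hub.
    apply (Hub (poly_sum g (fun j => match j with O => 0 | _ => 1 end) 1)).
    exists 1%nat, (fun j => match j with O => 0 | _ => 1 end). split; auto. split; auto. split; auto.
    intros j Hj. assert (j = O) by lia. subst. lra.
Qed.

Lemma geo_nonneg A p q : Rbar_le (Finite 0) (geodist A p q).
Proof.
  unfold geodist. destruct (Glb_Rbar_correct (LenSet A p q)) as [_ Hg].
  apply Hg. intros L [g [Hc HL]]. simpl. eapply len_nonneg; eauto.
Qed.

Lemma geo_approx A p q a e : geodist A p q = Finite a -> 0 < e ->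
  exists g L, curve_in A p q g /\ curve_length g = Finite L /\ L < a + e.
Proof.
  intros Ha He. apply NNPP. intros Hn.
  unfold geodist in Ha. destruct (Glb_Rbar_correct (LenSet A p q)) as [_ Hg].
  assert (Rbar_le (Finite (a + e)) (Finite a)).
  { rewrite <- Ha. apply Hg. intros L [g [Hc HL]]. simpl.
    apply Rnot_lt_le. intros HL'. apply Hn. exists g, L. auto. }
  simpl in H. lra.
Qed.

Definition constc (p : pt) : R -> pt := fun _ => p.

Lemma constc_len p : curve_length (constc p) = Finite 0.
Proof.
  apply Rbar_le_antisym.
  - apply len_le. intros t m _. clear. induction m; simpl. lra. change (constc p (t m)) with p. change (constc p (t (S m))) with p. rewrite dist2_refl. lra.
  - unfold curve_length.
    destruct (Lub_Rbar_correct (fun s => exists (m : nat) (t : nat -> R),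
      t O = 0 /\ t m = 1 /\ (forall j, (j < m)%nat -> t j < t (S j)) /\
      s = poly_sum (constc p) t m)) as [Hub _].
    apply (Hub 0). exists 1%nat, (fun j => match j with O => 0 | _ => 1 end).
    split; auto. split; auto. split. intros j Hj. assert (j = O) by lia. subst. lra.
    simpl. unfold constc. rewrite dist2_refl. ring.
Qed.

Lemma constc_curve A p : A p -> curve_in A p p (constc p).
Proof.
  intros Hp. split; [auto|split; [auto|split]]. intros; auto.
  intros t Ht e He. exists 1. split. lra. intros. unfold constc. rewrite dist2_refl. auto.
Qed.

Lemma geo_refl A p : A p -> geodist A p p = Finite 0.
Proof.
  intros Hp. apply Rbar_le_antisym.
  - apply (geo_le_curve A p p (constc p)). apply constc_curve; auto. apply constc_len.
  - apply geo_nonneg.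
Qed.

Lemma geo_tri A p q r a b : geodist A p q = Finite a -> geodist A q r = Finite b ->
  Rbar_le (geodist A p r) (Finite (a + b)).
Proof.
  intros Ha Hb.
  destruct (geodist A p r) as [c| |] eqn:E.
  - simpl. apply Rnot_lt_le. intros Hlt.
    set (e := (c - (a + b)) / 3).
    destruct (geo_approx A p q a e Ha) as [g1 [L1 [C1 [E1 H1]]]]. unfold e; lra.
    destruct (geo_approx A q r b e Hb) as [g2 [L2 [C2 [E2 H2]]]]. unfold e; lra.
    assert (Rbar_le (geodist A p r) (Finite (L1 + L2))).
    { apply (geo_le_curve' A p r (concat g1 g2)). eapply concat_curve; eauto.
      apply concat_len; auto. destruct C1 as [_ [G11 _]]. destruct C2 as [G20 _]. congruence. }
    rewrite E in H. simpl in H. unfold e in *. lra.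
  - exfalso.
    destruct (geo_approx A p q a 1 Ha) as [g1 [L1 [C1 [E1 H1]]]]. lra.
    destruct (geo_approx A q r b 1 Hb) as [g2 [L2 [C2 [E2 H2]]]]. lra.
    assert (Rbar_le (geodist A p r) (Finite (L1 + L2))).
    { apply (geo_le_curve' A p r (concat g1 g2)). eapply concat_curve; eauto.
      apply concat_len; auto. destruct C1 as [_ [G11 _]]. destruct C2 as [G20 _]. congruence. }
    rewrite E in H. simpl in H. auto.
  - pose proof (geo_nonneg A p r). rewrite E in H. simpl in H. contradiction.
Qed.

Lemma poly_sum_Psi k c g t m : (0 < k)%nat ->
  poly_sum (fun s => Psi k c (g s)) t m = poly_sum g t m / INR k.
Proof.
  intros Hk. assert (0 < INR k) by (apply lt_0_INR; auto).
  induction m; simpl. field. lra. rewrite IHm, dist2_Psi by auto. field. lra.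
Qed.

Lemma geo_scale A k c p q a : (1 <= k)%nat -> (forall z, A z -> A (Psi k c z)) ->
  geodist A p q = Finite a -> Rbar_le (geodist A (Psi k c p) (Psi k c q)) (Finite (a / INR k)).
Proof.
  intros Hk HA Ha. assert (Hk0 : 0 < INR k) by (apply lt_0_INR; lia).
  assert (Hk1 : 1 <= INR k) by (apply (le_INR 1); auto).
  destruct (geodist A (Psi k c p) (Psi k c q)) as [b| |] eqn:E.
  2,3: exfalso.
  1,2: assert (forall e, 0 < e -> Rbar_le (geodist A (Psi k c p) (Psi k c q)) (Finite ((a + e) / INR k))) as Hall;
  [ intros e He;
    destruct (geo_approx A p q a e Ha He) as [g [L [[G0 [G1 [GA Gc]]] [HL HLt]]]];
    apply (geo_le_curve' A _ _ (fun s => Psi k c (g s)));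
    [ split; [rewrite G0; auto|split; [rewrite G1; auto|split]];
      [ intros; apply HA; apply GA; auto
      | intros t Ht e' He'; destruct (Gc t Ht e' He') as [d [Hd Hc]]; exists d; split; auto;
        intros s Hs Hst; rewrite dist2_Psi by lia;
        specialize (Hc s Hs Hst); pose proof (dist2_nonneg (g s) (g t));
        apply (Rle_lt_trans _ (dist2 (g s) (g t))); auto;
        unfold Rdiv; rewrite <- (Rmult_1_r (dist2 (g s) (g t))) at 2;
        apply Rmult_le_compat_l; auto; rewrite <- Rinv_1; apply Rinv_le_contravar; lra ]
    | apply len_le; intros t m Hp; rewrite poly_sum_Psi by lia;
      pose proof (len_ub g L t m HL Hp);
      unfold Rdiv; apply Rmult_le_compat_r; [left; apply Rinv_0_lt_compat; auto|lra] ]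
  |].
  - simpl. apply Rnot_lt_le. intros Hlt.
    specialize (Hall ((b - a / INR k) * INR k / 2)).
    rewrite E in Hall. simpl in Hall.
    assert (0 < (b - a / INR k) * INR k / 2).
    { apply Rmult_lt_0_compat; [|lra]. apply Rmult_lt_0_compat; lra. }
    specialize (Hall H).
    assert ((a + (b - a / INR k) * INR k / 2) / INR k = a / INR k + (b - a / INR k) / 2) by (field; lra).
    rewrite H0 in Hall. lra.
  - specialize (Hall 1 Rlt_0_1). rewrite E in Hall. simpl in Hall. auto.
  - pose proof (geo_nonneg A (Psi k c p) (Psi k c q)). rewrite E in H. auto.
Qed.

Definition seg (a b : pt) (t : R) : pt :=
  (fst a + t * (fst b - fst a), snd a + t * (snd b - snd a)).

Lemma sqrt_scale r x y : sqrt ((r * x) ^ 2 + (r * y) ^ 2) = Rabs r * sqrt (x ^ 2 + y ^ 2).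
Proof.
  replace ((r * x) ^ 2 + (r * y) ^ 2) with (r ^ 2 * (x ^ 2 + y ^ 2)) by ring.
  rewrite sqrt_mult_alt by apply pow2_ge_0.
  rewrite <- (pow2_abs r). rewrite sqrt_pow2 by apply Rabs_pos. auto.
Qed.

Lemma dist2_seg a b s t : dist2 (seg a b s) (seg a b t) = Rabs (s - t) * dist2 a b.
Proof.
  unfold dist2, seg; cbn [fst snd].
  replace (fst a + s * (fst b - fst a) - (fst a + t * (fst b - fst a))) with ((s - t) * (fst b - fst a)) by ring.
  replace (snd a + s * (snd b - snd a) - (snd a + t * (snd b - snd a))) with ((s - t) * (snd b - snd a)) by ring.
  rewrite sqrt_scale. f_equal. f_equal. ring.
Qed.

Lemma geo_seg A a b : (forall t, 0 <= t <= 1 -> A (seg a b t)) ->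
  Rbar_le (geodist A a b) (Finite (dist2 a b)).
Proof.
  intros HA. apply (geo_le_curve' A a b (seg a b)).
  - split; [|split; [|split]].
    + unfold seg. destruct a; simpl. f_equal; ring.
    + unfold seg. destruct a, b; simpl. f_equal; ring.
    + auto.
    + intros t Ht e He. exists (e / (dist2 a b + 1)). split.
      { apply Rdiv_lt_0_compat; auto. pose proof (dist2_nonneg a b); lra. }
      intros s Hs Hst. rewrite dist2_seg. pose proof (dist2_nonneg a b).
      apply (Rle_lt_trans _ (Rabs (s - t) * (dist2 a b + 1))).
      { apply Rmult_le_compat_l. apply Rabs_pos. lra. }
      apply (Rmult_lt_compat_r (dist2 a b + 1)) in Hst; [|lra].
      unfold Rdiv in Hst. rewrite Rmult_assoc, Rinv_l, Rmult_1_r in Hst; lra.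
  - apply len_le. intros t m [T0 [T1 Tinc]].
    assert (forall j, (j <= m)%nat -> poly_sum (seg a b) t j = (t j - t O) * dist2 a b).
    { induction j; intros Hj; simpl. ring. rewrite IHj by lia. rewrite dist2_seg.
      assert (t j < t (S j)) by (apply Tinc; lia). rewrite Rabs_left by lra. ring. }
    rewrite H by lia. rewrite T0, T1. lra.
Qed.

Fixpoint psiw (k : nat) (c : nat -> pt) (w : list nat) (z : pt) : pt :=
  match w with nil => z | i :: w' => Psi k (c i) (psiw k c w' z) end.

Definition rw (k m : nat) : R := (/ INR k) ^ m.

Definition okw (N : nat) (w : list nat) : Prop := forall i, In i w -> (i < N)%nat.

Definition O2 : pt := (0, 0).

Lemma rw_pos k m : (1 <= k)%nat -> 0 < rw k m.
Proof. intros. unfold rw. apply pow_lt. apply Rinv_0_lt_compat. apply lt_0_INR. lia. Qed.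

Lemma rw_S k m : rw k (S m) = rw k m / INR k.
Proof. unfold rw. simpl. unfold Rdiv. ring. Qed.

Lemma rw_le1 k m : (1 <= k)%nat -> rw k m <= 1.
Proof.
  intros Hk. unfold rw. assert (1 <= INR k) by (apply (le_INR 1); auto).
  assert (0 < / INR k <= 1). { split. apply Rinv_0_lt_compat; lra. rewrite <- Rinv_1. apply Rinv_le_contravar; lra. }
  induction m; simpl. lra. assert (0 <= (/ INR k) ^ m) by (apply pow_le; lra).
  apply (Rle_trans _ (1 * (/ INR k) ^ m)). apply Rmult_le_compat_r; lra. lra.
Qed.

Lemma rw_small k e : (2 <= k)%nat -> 0 < e -> exists m, rw k m < e.
Proof.
  intros Hk He. assert (2 <= INR k) by (replace 2 with (INR 2) by (simpl; lra); apply le_INR; auto).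
  destruct (pow_lt_1_zero (/ INR k)) with (y := e) as [M HM]; auto.
  - rewrite Rabs_right. apply (Rmult_lt_reg_l (INR k)). lra. rewrite Rinv_r; lra.
    left. apply Rinv_0_lt_compat. lra.
  - exists M. specialize (HM M (le_n _)). unfold rw. rewrite Rabs_right in HM; auto.
    left. apply pow_lt. apply Rinv_0_lt_compat. lra.
Qed.

Lemma rw_mono k m m' : (1 <= k)%nat -> (m <= m')%nat -> rw k m' <= rw k m.
Proof.
  intros Hk Hm. induction Hm. lra. rewrite rw_S. assert (1 <= INR k) by (apply (le_INR 1); auto).
  pose proof (rw_pos k m0 Hk). apply (Rle_trans _ (rw k m0)); auto.
  unfold Rdiv. rewrite <- (Rmult_1_r (rw k m0)) at 2. apply Rmult_le_compat_l. lra.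
  rewrite <- Rinv_1. apply Rinv_le_contravar; lra.
Qed.

Lemma le_eps x : (forall e, 0 < e -> x <= e) -> x <= 0.
Proof. intros H. apply Rnot_lt_le. intros Hx. specialize (H (x/2) ltac:(lra)). lra. Qed.

Lemma psiw_affine k c w z : (1 <= k)%nat ->
  psiw k c w z = (fst (psiw k c w O2) + rw k (length w) * fst z,
                  snd (psiw k c w O2) + rw k (length w) * snd z).
Proof.
  intros Hk. assert (0 < INR k) by (apply lt_0_INR; lia).
  induction w as [|i w IH]; simpl. unfold rw, O2. simpl. destruct z. simpl. f_equal; ring.
  rewrite IH. unfold Psi. cbn [fst snd]. rewrite rw_S. f_equal; field; lra.
Qed.

Lemma dist2_psiw k c w p q : (1 <= k)%nat ->
  dist2 (psiw k c w p) (psiw k c w q) = rw k (length w) * dist2 p q.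
Proof.
  intros Hk. induction w as [|i w IH]; simpl. unfold rw; simpl; ring.
  rewrite dist2_Psi by lia. rewrite IH, rw_S. unfold Rdiv. ring.
Qed.

Lemma psiw_app k c w1 w2 z : psiw k c (w1 ++ w2) z = psiw k c w1 (psiw k c w2 z).
Proof. induction w1; simpl; auto. rewrite IHw1. auto. Qed.

Fixpoint allwords (N m : nat) : list (list nat) :=
  match m with
  | O => nil :: nil
  | S m' => flat_map (fun i => map (cons i) (allwords N m')) (seq 0 N)
  end.

Lemma allwords_spec N m w : In w (allwords N m) <-> (length w = m /\ okw N w).
Proof.
  revert w. induction m; intros w; simpl.
  - split. intros [<-|[]]. split; auto. intros i []. intros [Hl _]. destruct w; simpl in Hl; try lia. auto.
  - rewrite in_flat_map. split.
    + intros [i [Hi Hw]]. apply in_map_iff in Hw. destruct Hw as [w' [<- Hw']].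
      apply IHm in Hw'. destruct Hw' as [Hl Hok]. apply in_seq in Hi. split. simpl; lia.
      intros j [<-|Hj]. lia. auto.
    + intros [Hl Hok]. destruct w as [|i w']. simpl in Hl; lia.
      exists i. split. apply in_seq. split. lia. simpl. apply Hok. left; auto.
      apply in_map. apply IHm. split. simpl in Hl; lia. intros j Hj. apply Hok. right; auto.
Qed.

Section USC.
Variables (k N : nat) (c : nat -> pt) (K : pt -> Prop).
Hypothesis HU : is_USC k N c K.

Lemma U_k : (3 <= k)%nat.
Proof. destruct HU; auto. Qed.

Lemma U_k1 : (1 <= k)%nat. Proof. pose proof U_k. lia. Qed.

Lemma U_INRk : 3 <= INR k.
Proof. replace 3 with (INR 3) by (simpl; lra). apply le_INR. apply U_k. Qed.

Lemma U_FL_sq p : first_level k N c p -> unit_square p.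
Proof. destruct HU as [_ [_ [_ [_ [_ [_ [_ [H _]]]]]]]]. auto. Qed.

Lemma U_cell_sq i u : (i < N)%nat -> unit_square u -> unit_square (Psi k (c i) u).
Proof. intros Hi Hu. apply U_FL_sq. exists i. split; auto. exists u. auto. Qed.

Lemma U_c_bounds i : (i < N)%nat ->
  0 <= fst (c i) /\ fst (c i) + / INR k <= 1 /\ 0 <= snd (c i) /\ snd (c i) + / INR k <= 1.
Proof.
  intros Hi. pose proof U_INRk.
  assert (H0 := U_cell_sq i (0,0) Hi). assert (H1 := U_cell_sq i (1,1) Hi).
  unfold unit_square, Psi in *; simpl in *.
  unfold Rdiv in *. rewrite Rmult_0_l, Rplus_0_l in H0. rewrite Rmult_1_l in H1. lra.
Qed.

Lemma U_K_self i z : (i < N)%nat -> K z -> K (Psi k (c i) z).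
Proof.
  intros Hi Hz. destruct HU as [_ [_ [_ [_ [_ [_ [_ [_ [_ [_ [_ H]]]]]]]]]]].
  apply H. exists i. split; auto. exists z. auto.
Qed.

Lemma U_K_dec p : K p -> exists i z, (i < N)%nat /\ K z /\ p = Psi k (c i) z.
Proof.
  intros Hp. destruct HU as [_ [_ [_ [_ [_ [_ [_ [_ [_ [_ [_ H]]]]]]]]]]].
  apply H in Hp. destruct Hp as [i [Hi [z [Hz ->]]]]. exists i, z. auto.
Qed.

Lemma U_closed : closed2 K.
Proof. destruct HU as [_ [_ [_ [_ [_ [_ [_ [_ [_ [H _]]]]]]]]]]. auto. Qed.

Lemma U_bounded : bounded2 K.
Proof. destruct HU as [_ [_ [_ [_ [_ [_ [_ [_ [_ [_ [H _]]]]]]]]]]]. auto. Qed.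

Lemma U_nonempty : exists p, K p.
Proof. destruct HU as [_ [_ [_ [_ [_ [_ [_ [_ [H _]]]]]]]]]. auto. Qed.

Lemma psiw_K w z : okw N w -> K z -> K (psiw k c w z).
Proof.
  induction w as [|i w IH]; simpl; intros Hok Hz; auto.
  apply U_K_self. apply Hok; left; auto. apply IH; auto. intros j Hj; apply Hok; right; auto.
Qed.

Lemma psiw_sq w z : okw N w -> unit_square z -> unit_square (psiw k c w z).
Proof.
  induction w as [|i w IH]; simpl; intros Hok Hz; auto.
  apply U_cell_sq. apply Hok; left; auto. apply IH; auto. intros j Hj; apply Hok; right; auto.
Qed.

Lemma K_decomp m p : K p -> exists w z, In w (allwords N m) /\ K z /\ p = psiw k c w z.
Proof.
  revert p. induction m; intros p Hp.
  - exists nil, p. simpl. auto.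
  - destruct (U_K_dec p Hp) as [i [z [Hi [Hz ->]]]].
    destruct (IHm z Hz) as [w [z' [Hw [Hz' ->]]]].
    exists (i :: w), z'. split; [|split; auto].
    apply allwords_spec. apply allwords_spec in Hw. destruct Hw as [Hl Hok].
    split. simpl; lia. intros j [<-|Hj]; auto.
Qed.

Lemma sq_O2 : unit_square O2.
Proof. unfold unit_square, O2; simpl; lra. Qed.

Lemma sq_11 : unit_square (1,1).
Proof. unfold unit_square; simpl; lra. Qed.

Lemma cw_bounds w : okw N w ->
  0 <= fst (psiw k c w O2) /\ fst (psiw k c w O2) + rw k (length w) <= 1 /\
  0 <= snd (psiw k c w O2) /\ snd (psiw k c w O2) + rw k (length w) <= 1.
Proof.
  intros Hok. pose proof (psiw_sq w O2 Hok sq_O2). pose proof (psiw_sq w (1,1) Hok sq_11).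
  rewrite (psiw_affine k c w (1,1)) in H0 by apply U_k1. unfold unit_square in *. simpl in *. lra.
Qed.

Lemma K_sq p : K p -> unit_square p.
Proof.
  intros Hp. destruct U_bounded as [M HM].
  assert (Hall : forall m, -(rw k m * M) <= fst p <= 1 + rw k m * M /\ -(rw k m * M) <= snd p <= 1 + rw k m * M).
  { intros m. destruct (K_decomp m p Hp) as [w [z [Hw [Hz ->]]]].
    apply allwords_spec in Hw. destruct Hw as [Hl Hok].
    pose proof (cw_bounds w Hok). rewrite (psiw_affine k c w z) by apply U_k1. simpl. rewrite Hl in *.
    specialize (HM z Hz). pose proof (coord1_le z O2). pose proof (coord2_le z O2).
    unfold O2 in *; simpl in *. rewrite Rminus_0_r in *. apply Rabs_le_between in H0. apply Rabs_le_between in H1.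
    pose proof (rw_pos k m U_k1). pose proof (rw_le1 k m U_k1).
    assert (rw k m * fst z <= rw k m * M) by (apply Rmult_le_compat_l; lra).
    assert (- (rw k m * M) <= rw k m * fst z) by (rewrite Ropp_mult_distr_r; apply Rmult_le_compat_l; lra).
    assert (rw k m * snd z <= rw k m * M) by (apply Rmult_le_compat_l; lra).
    assert (- (rw k m * M) <= rw k m * snd z) by (rewrite Ropp_mult_distr_r; apply Rmult_le_compat_l; lra).
    lra. }
  assert (HM0 : 0 <= M). { specialize (HM p Hp). pose proof (dist2_nonneg p (0,0)). lra. }
  assert (Hsmall : forall e, 0 < e -> exists m, rw k m * M < e).
  { intros e He. destruct (rw_small k (e / (M + 1))) as [m Hm]. pose proof U_k; lia.
    apply Rdiv_lt_0_compat; lra. exists m. pose proof (rw_pos k m U_k1).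
    apply (Rle_lt_trans _ (rw k m * (M + 1))). apply Rmult_le_compat_l; lra.
    apply (Rmult_lt_compat_r (M+1)) in Hm; [|lra]. unfold Rdiv in Hm.
    rewrite Rmult_assoc, Rinv_l, Rmult_1_r in Hm; lra. }
  unfold unit_square. split; split.
  - assert (- fst p <= 0); [|lra]. apply le_eps. intros e He. destruct (Hsmall e He) as [m Hm]. specialize (Hall m). lra.
  - assert (fst p - 1 <= 0); [|lra]. apply le_eps. intros e He. destruct (Hsmall e He) as [m Hm]. specialize (Hall m). lra.
  - assert (- snd p <= 0); [|lra]. apply le_eps. intros e He. destruct (Hsmall e He) as [m Hm]. specialize (Hall m). lra.
  - assert (snd p - 1 <= 0); [|lra]. apply le_eps. intros e He. destruct (Hsmall e He) as [m Hm]. specialize (Hall m). lra.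
Qed.

End USC.

Definition bd (p : pt) : Prop :=
  unit_square p /\ (fst p = 0 \/ fst p = 1 \/ snd p = 0 \/ snd p = 1).

Lemma bd_sq p : bd p -> unit_square p. Proof. intros [H _]; auto. Qed.
Lemma bd_O2 : bd O2. Proof. split. apply sq_O2. unfold O2; simpl; auto. Qed.

Lemma Rmax_le_abs a b : Rmax a b <= a + Rabs (a - b).
Proof. unfold Rmax, Rabs. destruct (Rle_dec a b); destruct (Rcase_abs (a - b)); lra. Qed.
Lemma Rmax_le_abs' a b : Rmax a b <= b + Rabs (a - b).
Proof. unfold Rmax, Rabs. destruct (Rle_dec a b); destruct (Rcase_abs (a - b)); lra. Qed.

Section USC2.
Variables (k N : nat) (c : nat -> pt) (K : pt -> Prop).
Hypothesis HU : is_USC k N c K.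

Let Hk3 := U_INRk k N c K HU.
Let Hk1 := U_k1 k N c K HU.

Lemma mul_k_div x : x / INR k * INR k = x.
Proof. field. lra. Qed.

Lemma in_cell i P : fst (c i) <= fst P <= fst (c i) + / INR k ->
  snd (c i) <= snd P <= snd (c i) + / INR k -> cell k c i P.
Proof.
  intros H1 H2. exists ((fst P - fst (c i)) * INR k, (snd P - snd (c i)) * INR k).
  split.
  - unfold unit_square; simpl. split; split.
    + apply Rmult_le_pos; lra.
    + apply (Rmult_le_reg_r (/ INR k)). apply Rinv_0_lt_compat; lra.
      rewrite Rmult_assoc, Rinv_r, Rmult_1_r, Rmult_1_l; lra.
    + apply Rmult_le_pos; lra.
    + apply (Rmult_le_reg_r (/ INR k)). apply Rinv_0_lt_compat; lra.
      rewrite Rmult_assoc, Rinv_r, Rmult_1_r, Rmult_1_l; lra.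
  - unfold Psi; simpl. destruct P; simpl. f_equal; field; lra.
Qed.

Lemma sep1 i j : (i < N)%nat -> (j < N)%nat -> i <> j ->
  / INR k <= Rabs (fst (c i) - fst (c j)) \/ / INR k <= Rabs (snd (c i) - snd (c j)).
Proof.
  intros Hi Hj Hij. apply NNPP. intros Hn.
  apply not_or_and in Hn. destruct Hn as [Hn1 Hn2]. apply Rnot_le_lt in Hn1, Hn2.
  set (s := / INR k) in *.
  set (h := Rmin (s - Rabs (fst (c i) - fst (c j))) (s - Rabs (snd (c i) - snd (c j)))).
  assert (Hh : 0 < h) by (apply Rmin_glb_lt; lra).
  assert (Hh1 : h <= s - Rabs (fst (c i) - fst (c j))) by apply Rmin_l.
  assert (Hh2 : h <= s - Rabs (snd (c i) - snd (c j))) by apply Rmin_r.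
  pose proof (Rmax_l (fst (c i)) (fst (c j))). pose proof (Rmax_r (fst (c i)) (fst (c j))).
  pose proof (Rmax_l (snd (c i)) (snd (c j))). pose proof (Rmax_r (snd (c i)) (snd (c j))).
  pose proof (Rmax_le_abs (fst (c i)) (fst (c j))). pose proof (Rmax_le_abs' (fst (c i)) (fst (c j))).
  pose proof (Rmax_le_abs (snd (c i)) (snd (c j))). pose proof (Rmax_le_abs' (snd (c i)) (snd (c j))).
  set (M1 := Rmax (fst (c i)) (fst (c j))) in *. set (M2 := Rmax (snd (c i)) (snd (c j))) in *.
  assert (Hin : forall P, M1 <= fst P <= M1 + h -> M2 <= snd P <= M2 + h ->
            cell k c i P /\ cell k c j P).
  { intros P HP1 HP2. split; apply in_cell; fold s; lra. }
  pose proof HU as HU'. destruct HU' as [_ [_ [_ [Hsp _]]]].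
  specialize (Hsp i j Hi Hj Hij).
  assert (I0 := Hin (M1, M2) ltac:(simpl; lra) ltac:(simpl; lra)).
  assert (I1 := Hin (M1 + h, M2) ltac:(simpl; lra) ltac:(simpl; lra)).
  assert (I2 := Hin (M1, M2 + h) ltac:(simpl; lra) ltac:(simpl; lra)).
  destruct Hsp as [He|[[a Ha]|[a [b Hs]]]].
  - apply (He (M1, M2)). auto.
  - apply Ha in I0. apply Ha in I1. rewrite <- I1 in I0. injection I0. lra.
  - apply Hs in I0. apply Hs in I1. apply Hs in I2.
    destruct I0 as [t0 [_ E0]]. destruct I1 as [t1 [_ E1]]. destruct I2 as [t2 [_ E2]].
    injection E0 as E01 E02. injection E1 as E11 E12. injection E2 as E21 E22.
    set (d1 := fst b - fst a) in *. set (d2 := snd b - snd a) in *.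
    assert (A1 : (t1 - t0) * d1 = h) by lra. assert (A2 : (t1 - t0) * d2 = 0) by lra.
    assert (A3 : (t2 - t0) * d2 = h) by lra.
    apply Rmult_integral in A2. destruct A2 as [A2|A2].
    + rewrite A2 in A1. lra.
    + rewrite A2 in A3. lra.
Qed.

Lemma junction i j z : (i < N)%nat -> (j < N)%nat -> i <> j ->
  cell k c i z -> cell k c j z -> exists u, bd u /\ z = Psi k (c i) u.
Proof.
  intros Hi Hj Hij [u [Hu Ez]] [v [Hv Ez']].
  exists u. split; auto. split; auto.
  rewrite Ez in Ez'. unfold Psi in Ez'. injection Ez' as Z1 Z2.
  destruct Hu as [[U1 U1'] [U2 U2']]. destruct Hv as [[V1 V1'] [V2 V2']].
  assert (E1 : fst u = fst v + (fst (c j) - fst (c i)) * INR k).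
  { apply (Rmult_eq_reg_r (/ INR k)). 2: apply Rinv_neq_0_compat; lra.
    rewrite Rmult_plus_distr_r, Rmult_assoc, Rinv_r, Rmult_1_r by lra. unfold Rdiv in Z1. lra. }
  assert (E2 : snd u = snd v + (snd (c j) - snd (c i)) * INR k).
  { apply (Rmult_eq_reg_r (/ INR k)). 2: apply Rinv_neq_0_compat; lra.
    rewrite Rmult_plus_distr_r, Rmult_assoc, Rinv_r, Rmult_1_r by lra. unfold Rdiv in Z2. lra. }
  assert (Hs : / INR k * INR k = 1) by (apply Rinv_l; lra).
  destruct (sep1 i j Hi Hj Hij) as [S|S]; unfold Rabs in S; destruct (Rcase_abs _) in S.
  - (* c_i1 < c_j1 : u1 = 1 *)
    assert (1 <= (fst (c j) - fst (c i)) * INR k).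
    { rewrite <- Hs. apply Rmult_le_compat_r; lra. }
    right; left. lra.
  - assert ((fst (c j) - fst (c i)) * INR k <= -1).
    { assert (/ INR k * INR k <= (fst (c i) - fst (c j)) * INR k) by (apply Rmult_le_compat_r; lra). lra. }
    left. lra.
  - assert (1 <= (snd (c j) - snd (c i)) * INR k).
    { rewrite <- Hs. apply Rmult_le_compat_r; lra. }
    right; right; right. lra.
  - assert ((snd (c j) - snd (c i)) * INR k <= -1).
    { assert (/ INR k * INR k <= (snd (c i) - snd (c j)) * INR k) by (apply Rmult_le_compat_r; lra). lra. }
    right; right; left. lra.
Qed.


Lemma FL_bot x : 0 <= x <= 1 -> first_level k N c (x, 0).
Proof. intros Hx. pose proof HU as H'. destruct H' as [_ [_ [_ [_ [_ [_ [HH _]]]]]]]. auto. Qed.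

Lemma FL_D4 g q : In g D4 -> first_level k N c q -> first_level k N c (g q).
Proof.
  intros Hg Hq. pose proof HU as H'. destruct H' as [_ [_ [_ [_ [_ [H _]]]]]].
  apply (H g Hg). exists q. auto.
Qed.

Lemma div_eq0 u a : 0 <= u -> 0 <= a -> u / INR k + a = 0 -> u = 0.
Proof.
  intros Hu Ha E. assert (0 <= u / INR k) by (apply Rdiv_le_0_compat; lra).
  assert (u / INR k = 0) by lra. rewrite <- (mul_k_div u). rewrite H0. ring.
Qed.

Lemma div_eq1 u a : u <= 1 -> a + / INR k <= 1 -> u / INR k + a = 1 -> u = 1.
Proof.
  intros Hu Ha E. assert (/ INR k <= u / INR k) by lra.
  assert (u / INR k <= 1 / INR k) by (unfold Rdiv; apply Rmult_le_compat_r; [left; apply Rinv_0_lt_compat; lra|lra]).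
  assert (u / INR k = 1 / INR k) by (unfold Rdiv in *; lra).
  rewrite <- (mul_k_div u). rewrite H1. field. lra.
Qed.

Lemma edge_K (E : pt -> Prop) : (forall p, E p -> unit_square p) ->
  (forall p, E p -> exists i u, (i < N)%nat /\ E u /\ p = Psi k (c i) u) ->
  forall p, E p -> K p.
Proof.
  intros Esq Edec p Hp.
  assert (Hit : forall m p, E p -> exists w u, okw N w /\ length w = m /\ E u /\ p = psiw k c w u).
  { induction m; intros p0 Hp0.
    - exists nil, p0. split. intros i []. auto.
    - destruct (Edec p0 Hp0) as [i [u [Hi [Hu ->]]]].
      destruct (IHm u Hu) as [w [u' [Hok [Hl [Hu' ->]]]]].
      exists (i :: w), u'. split. intros j [<-|Hj]; auto. split. simpl; lia. split; auto. }
  destruct (U_nonempty k N c K HU) as [z0 Hz0].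
  destruct (U_bounded k N c K HU) as [M HM].
  apply (U_closed k N c K HU). intros e He.
  pose proof (HM z0 Hz0) as HMz.
  destruct (rw_small k (e / (M + 3))) as [m Hm]. pose proof (U_k k N c K HU); lia.
  apply Rdiv_lt_0_compat; auto. pose proof (dist2_nonneg z0 (0,0)); lra.
  destruct (Hit m p Hp) as [w [u [Hok [Hl [Hu ->]]]]].
  exists (psiw k c w z0). split. apply (psiw_K k N c K HU); auto.
  rewrite dist2_psiw by auto. rewrite Hl.
  assert (dist2 u z0 <= M + 2).
  { pose proof (dist2_tri u (0,0) z0). rewrite (dist2_sym (0,0) z0) in H.
    pose proof (dist2_le_coords u (0,0)). destruct (Esq u Hu) as [[? ?] [? ?]].
    simpl in H0. rewrite !Rminus_0_r, !Rabs_right in H0 by lra. lra. }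
  pose proof (rw_pos k m Hk1).
  apply (Rle_lt_trans _ (rw k m * (M + 3))). apply Rmult_le_compat_l; lra.
  apply (Rmult_lt_compat_r (M + 3)) in Hm. 2: { pose proof (dist2_nonneg z0 (0,0)); lra. }
  unfold Rdiv in Hm. rewrite Rmult_assoc, Rinv_l, Rmult_1_r in Hm. lra.
  pose proof (dist2_nonneg z0 (0,0)); lra.
Qed.

Lemma bd_K p : bd p -> K p.
Proof.
  intros [Hsq Hp]. pose proof Hsq as [[A1 A2] [B1 B2]].
  destruct Hp as [H|[H|[H|H]]].
  -
    apply (edge_K (fun p => 0 <= snd p <= 1 /\ fst p = 0)); [| |split; auto].
    + intros q [? ?]. unfold unit_square. lra.
    + intros q [Hq1 Hq2].
      assert (FL : first_level k N c q).
      { destruct q as [a b]. simpl in *. subst a.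
        apply (FL_D4 (fun p => (snd p, fst p)) (b, 0)). simpl. right; right; right; right; left; auto.
        apply FL_bot; auto. }
      destruct FL as [i [Hi [u [Hu ->]]]]. exists i, u. split; auto. split; auto.
      split. destruct Hu; auto. unfold Psi in Hq2; simpl in Hq2.
      destruct Hu as [[? ?] ?]. pose proof (U_c_bounds k N c K HU i Hi). apply (div_eq0 (fst u) (fst (c i))); lra.
  -
    apply (edge_K (fun p => 0 <= snd p <= 1 /\ fst p = 1)); [| |split; auto].
    + intros q [? ?]. unfold unit_square. lra.
    + intros q [Hq1 Hq2].
      assert (FL : first_level k N c q).
      { destruct q as [a b]. simpl in *. subst a.
        assert (HH := FL_D4 (fun p => (1 - snd p, fst p)) (b, 0)). simpl in HH.
        replace (1 - 0) with 1 in HH by ring. apply HH.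
        right; right; right; right; right; left; auto. apply FL_bot; auto. }
      destruct FL as [i [Hi [u [Hu ->]]]]. exists i, u. split; auto. split; auto.
      split. destruct Hu; auto. unfold Psi in Hq2; simpl in Hq2.
      destruct Hu as [[? ?] ?]. pose proof (U_c_bounds k N c K HU i Hi). apply (div_eq1 (fst u) (fst (c i))); lra.
  -
    apply (edge_K (fun p => 0 <= fst p <= 1 /\ snd p = 0)); [| |split; auto].
    + intros q [? ?]. unfold unit_square. lra.
    + intros q [Hq1 Hq2].
      assert (FL : first_level k N c q).
      { destruct q as [a b]. simpl in *. subst b. apply FL_bot; auto. }
      destruct FL as [i [Hi [u [Hu ->]]]]. exists i, u. split; auto. split; auto.
      split. destruct Hu; auto. unfold Psi in Hq2; simpl in Hq2.
      destruct Hu as [? [? ?]]. pose proof (U_c_bounds k N c K HU i Hi). apply (div_eq0 (snd u) (snd (c i))); lra.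
  -
    apply (edge_K (fun p => 0 <= fst p <= 1 /\ snd p = 1)); [| |split; auto].
    + intros q [? ?]. unfold unit_square. lra.
    + intros q [Hq1 Hq2].
      assert (FL : first_level k N c q).
      { destruct q as [a b]. simpl in *. subst b.
        assert (HH := FL_D4 (fun p => (fst p, 1 - snd p)) (a, 0)). simpl in HH.
        replace (1 - 0) with 1 in HH by ring. apply HH.
        right; right; left; auto. apply FL_bot; auto. }
      destruct FL as [i [Hi [u [Hu ->]]]]. exists i, u. split; auto. split; auto.
      split. destruct Hu; auto. unfold Psi in Hq2; simpl in Hq2.
      destruct Hu as [? [? ?]]. pose proof (U_c_bounds k N c K HU i Hi). apply (div_eq1 (snd u) (snd (c i))); lra.
Qed.

Lemma cell_closed w : closed2 (image (psiw k c w) K).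
Proof.
  intros p Hp.
  set (cw := psiw k c w O2). set (r := rw k (length w)).
  assert (Hr : 0 < r) by (apply rw_pos; auto).
  set (z := ((fst p - fst cw) / r, (snd p - snd cw) / r)).
  assert (Ep : p = psiw k c w z).
  { rewrite (psiw_affine k c w z) by auto. fold cw r. unfold z; simpl. destruct p; simpl. f_equal; field; lra. }
  exists z. split; auto.
  apply (U_closed k N c K HU). intros e He.
  destruct (Hp (e * r)) as [q [[z' [Hz' ->]] Hd]]. apply Rmult_lt_0_compat; auto.
  exists z'. split; auto. rewrite Ep in Hd. rewrite dist2_psiw in Hd by auto. fold r in Hd.
  apply (Rmult_lt_reg_l r); auto. lra.
Qed.

Lemma sepm m w w' : In w (allwords N m) -> In w' (allwords N m) -> w <> w' ->
  rw k m <= Rabs (fst (psiw k c w O2) - fst (psiw k c w' O2)) \/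
  rw k m <= Rabs (snd (psiw k c w O2) - snd (psiw k c w' O2)).
Proof.
  revert w w'. induction m; intros w w' Hw Hw' Hne.
  - simpl in Hw, Hw'. destruct Hw as [<-|[]]. destruct Hw' as [<-|[]]. congruence.
  - apply allwords_spec in Hw. apply allwords_spec in Hw'.
    destruct Hw as [Hl Hok]. destruct Hw' as [Hl' Hok'].
    destruct w as [|i u]; [simpl in Hl; lia|]. destruct w' as [|j u']; [simpl in Hl'; lia|].
    simpl in Hl, Hl'. injection Hl as Hl. injection Hl' as Hl'.
    assert (Hoku : okw N u) by (intros a Ha; apply Hok; right; auto).
    assert (Hoku' : okw N u') by (intros a Ha; apply Hok'; right; auto).
    assert (Hi : (i < N)%nat) by (apply Hok; left; auto).
    assert (Hj : (j < N)%nat) by (apply Hok'; left; auto).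
    simpl psiw. unfold Psi. cbn [fst snd]. rewrite rw_S.
    pose proof (cw_bounds k N c K HU u Hoku) as Bu. pose proof (cw_bounds k N c K HU u' Hoku') as Bu'.
    rewrite Hl in Bu. rewrite Hl' in Bu'.
    set (a1 := fst (psiw k c u O2)) in *. set (a2 := snd (psiw k c u O2)) in *.
    set (b1 := fst (psiw k c u' O2)) in *. set (b2 := snd (psiw k c u' O2)) in *.
    assert (Hs : 0 < / INR k) by (apply Rinv_0_lt_compat; lra).
    assert (Ediv : forall x y : R, x / INR k + fst (c i) - (y / INR k + fst (c j)) = (x - y) * / INR k + (fst (c i) - fst (c j))) by (intros; unfold Rdiv; ring).
    assert (Ediv2 : forall x y : R, x / INR k + snd (c i) - (y / INR k + snd (c j)) = (x - y) * / INR k + (snd (c i) - snd (c j))) by (intros; unfold Rdiv; ring).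
    rewrite Ediv, Ediv2. unfold Rdiv.
    destruct (Nat.eq_dec i j) as [<-|Hij].
      replace (fst (c i) - fst (c i)) with 0 by ring. replace (snd (c i) - snd (c i)) with 0 by ring.
      rewrite !Rplus_0_r. rewrite !Rabs_mult. rewrite (Rabs_right (/ INR k)) by lra.
      assert (u <> u') by congruence.
      destruct (IHm u u') as [S|S]; auto. apply allwords_spec; auto. apply allwords_spec; auto.
      * left. apply Rmult_le_compat_r; [lra|exact S].
      * right. apply Rmult_le_compat_r; [lra|exact S].
    + assert (Da : Rabs ((a1 - b1) * / INR k) <= (1 - rw k m) * / INR k).
      { rewrite Rabs_mult, (Rabs_right (/ INR k)) by lra. apply Rmult_le_compat_r. lra.
        apply Rabs_le. lra. }
      assert (Db : Rabs ((a2 - b2) * / INR k) <= (1 - rw k m) * / INR k).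
      { rewrite Rabs_mult, (Rabs_right (/ INR k)) by lra. apply Rmult_le_compat_r. lra.
        apply Rabs_le. lra. }
      destruct (sep1 i j Hi Hj Hij) as [S|S].
      * left. pose proof (Rabs_triang_inv (fst (c i) - fst (c j)) (-((a1 - b1) * / INR k))).
        rewrite Rabs_Ropp in H. replace (fst (c i) - fst (c j) - - ((a1 - b1) * / INR k)) with ((a1 - b1) * / INR k + (fst (c i) - fst (c j))) in H by ring.
        lra.
      * right. pose proof (Rabs_triang_inv (snd (c i) - snd (c j)) (-((a2 - b2) * / INR k))).
        rewrite Rabs_Ropp in H. replace (snd (c i) - snd (c j) - - ((a2 - b2) * / INR k)) with ((a2 - b2) * / INR k + (snd (c i) - snd (c j))) in H by ring.
        lra.
Qed.

End USC2.

Definition idx4 (s t : R) : nat :=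
  if Rlt_dec t s then 0%nat else if Rlt_dec t (2 * s) then 1%nat
  else if Rlt_dec t (3 * s) then 2%nat else 3%nat.

Lemma idx4_lt s t : (idx4 s t < 4)%nat.
Proof. unfold idx4. repeat destruct Rlt_dec; lia. Qed.

Lemma idx4_close s t t' : 0 < s -> 0 <= t <= 3 * s -> 0 <= t' <= 3 * s ->
  idx4 s t = idx4 s t' -> Rabs (t - t') < s.
Proof.
  intros Hs Ht Ht' E. unfold idx4 in E.
  apply Rabs_def1;
  repeat destruct Rlt_dec; try discriminate; lra.
Qed.

Section Count.
Variables (k N : nat) (c : nat -> pt) (K : pt -> Prop).
Hypothesis HU : is_USC k N c K.

Lemma count16 m x (l : list (list nat)) : NoDup l ->
  (forall w, In w l -> In w (allwords N m) /\
     exists p, image (psiw k c w) K p /\ dist2 p x <= rw k m) ->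
  (length l <= 16)%nat.
Proof.
  intros Hnd Hl.
  set (s := rw k m).
  assert (Hs : 0 < s) by (apply rw_pos; apply (U_k1 k N c K HU)).
  set (f := fun w => (4 * idx4 s (fst (psiw k c w O2) - fst x + 2 * s) +
                          idx4 s (snd (psiw k c w O2) - snd x + 2 * s))%nat).
  assert (Hrange : forall w, In w l ->
     0 <= fst (psiw k c w O2) - fst x + 2 * s <= 3 * s /\
     0 <= snd (psiw k c w O2) - snd x + 2 * s <= 3 * s).
  { intros w Hw. destruct (Hl w Hw) as [Hwa [p [[z [Hz ->]] Hd]]].
    apply allwords_spec in Hwa. destruct Hwa as [Hlen Hok].
    pose proof (K_sq k N c K HU z Hz) as [[? ?] [? ?]].
    pose proof (coord1_le (psiw k c w z) x). pose proof (coord2_le (psiw k c w z) x).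
    rewrite (psiw_affine k c w z) in H3, H4 by apply (U_k1 k N c K HU).
    rewrite (psiw_affine k c w z) in Hd by apply (U_k1 k N c K HU).
    simpl in H3, H4. rewrite Hlen in H3, H4, Hd. fold s in H3, H4, Hd.
    assert (s * fst z <= s * 1) by (apply Rmult_le_compat_l; lra).
    assert (0 <= s * fst z) by (apply Rmult_le_pos; lra).
    assert (s * snd z <= s * 1) by (apply Rmult_le_compat_l; lra).
    assert (0 <= s * snd z) by (apply Rmult_le_pos; lra).
    apply Rabs_le_between in H3. apply Rabs_le_between in H4. lra. }
  assert (Hnd' : NoDup (map f l)).
  { apply NoDup_map_NoDup_ForallPairs; auto.
    intros w w' Hw Hw' Ef. destruct (list_eq_dec Nat.eq_dec w w') as [|Hne]; auto. exfalso.
    unfold f in Ef.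
    pose proof (idx4_lt s (fst (psiw k c w O2) - fst x + 2 * s)).
    pose proof (idx4_lt s (snd (psiw k c w O2) - snd x + 2 * s)).
    pose proof (idx4_lt s (fst (psiw k c w' O2) - fst x + 2 * s)).
    pose proof (idx4_lt s (snd (psiw k c w' O2) - snd x + 2 * s)).
    assert (E1 : idx4 s (fst (psiw k c w O2) - fst x + 2 * s) = idx4 s (fst (psiw k c w' O2) - fst x + 2 * s)) by lia.
    assert (E2 : idx4 s (snd (psiw k c w O2) - snd x + 2 * s) = idx4 s (snd (psiw k c w' O2) - snd x + 2 * s)) by lia.
    destruct (Hrange w Hw) as [R1 R2]. destruct (Hrange w' Hw') as [R1' R2'].
    apply idx4_close in E1; auto. apply idx4_close in E2; auto.
    destruct (Hl w Hw) as [Hwa _]. destruct (Hl w' Hw') as [Hwa' _].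
    destruct (sepm k N c K HU m w w' Hwa Hwa' Hne) as [S|S]; fold s in S.
    - replace (fst (psiw k c w O2) - fst x + 2 * s - (fst (psiw k c w' O2) - fst x + 2 * s))
        with (fst (psiw k c w O2) - fst (psiw k c w' O2)) in E1 by ring. lra.
    - replace (snd (psiw k c w O2) - snd x + 2 * s - (snd (psiw k c w' O2) - snd x + 2 * s))
        with (snd (psiw k c w O2) - snd (psiw k c w' O2)) in E2 by ring. lra. }
  rewrite <- (length_map f l).
  replace 16%nat with (length (seq 0 16)) by reflexivity.
  apply NoDup_incl_length; auto.
  intros n Hn. apply in_map_iff in Hn. destruct Hn as [w [<- _]]. apply in_seq.
  unfold f. pose proof (idx4_lt s (fst (psiw k c w O2) - fst x + 2 * s)).
  pose proof (idx4_lt s (snd (psiw k c w O2) - snd x + 2 * s)). lia.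
Qed.

End Count.

Inductive chainP (cl : list nat -> pt -> Prop) : pt -> list (list nat) -> pt -> Prop :=
| ch1 : forall w p q, cl w p -> cl w q -> chainP cl p (w :: nil) q
| chS : forall w l p z q, cl w p -> cl w z -> chainP cl z l q -> chainP cl p (w :: l) q.

Definition cont01 (g : R -> pt) : Prop :=
  forall t, 0 <= t <= 1 -> forall e, 0 < e -> exists d, 0 < d /\
     forall s, 0 <= s <= 1 -> Rabs (s - t) < d -> dist2 (g s) (g t) < e.

Lemma finite_min (P : list nat -> R -> Prop) (Ws : list (list nat)) :
  (forall w e e', 0 < e' <= e -> P w e -> P w e') ->
  (forall w, In w Ws -> exists e, 0 < e /\ P w e) ->
  exists e, 0 < e /\ forall w, In w Ws -> P w e.
Proof.
  intros Hmono. induction Ws as [|w Ws IH]; intros H.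
  - exists 1. split. lra. intros w [].
  - destruct (H w (or_introl eq_refl)) as [e1 [He1 Hw]].
    destruct IH as [e2 [He2 Hr]]. intros; apply H; right; auto.
    exists (Rmin e1 e2). split. apply Rmin_glb_lt; auto.
    intros w' [Ew|Hw']. subst w'. apply (Hmono w e1). split. apply Rmin_glb_lt; auto. apply Rmin_l. auto.
    apply (Hmono w' e2). split. apply Rmin_glb_lt; auto. apply Rmin_r. auto.
Qed.

Lemma exit_chain (g : R -> pt) (cl : list nat -> pt -> Prop) :
  cont01 g -> (forall w, closed2 (cl w)) ->
  forall n Ws a, (length Ws <= n)%nat -> 0 <= a <= 1 ->
  (forall t, a <= t <= 1 -> exists w, In w Ws /\ cl w (g t)) ->
  exists l, chainP cl (g a) l (g 1) /\ NoDup l /\ incl l Ws /\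
    (forall w, In w l -> exists t, a <= t <= 1 /\ cl w (g t)).
Proof.
  intros Hc Hcl. induction n; intros Ws a Hlen Ha Hcov.
  - destruct (Hcov a ltac:(lra)) as [w [Hw _]]. destruct Ws; simpl in *; [contradiction|lia].
  - destruct (Hcov a ltac:(lra)) as [w0 [Hw0 Hga]].
    set (E := fun t => a <= t <= 1 /\ cl w0 (g t)).
    destruct (completeness E) as [tau [Hub Hlub]].
    { exists 1. intros t [Ht _]. lra. }
    { exists a. split; auto. lra. }
    assert (Hat : a <= tau) by (apply Hub; split; auto; lra).
    assert (Ht1 : tau <= 1) by (apply Hlub; intros t [Ht _]; lra).
    assert (Hgt : cl w0 (g tau)).
    { apply (Hcl w0). intros e He.
      destruct (Hc tau ltac:(lra) e He) as [d [Hd Hcd]].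
      destruct (classic (exists t, E t /\ tau - d < t)) as [[t [[Ht Hct] Htd]]|Hn].
      - exists (g t). split; auto. rewrite dist2_sym. apply Hcd. lra.
        assert (t <= tau) by (apply Hub; split; auto). apply Rabs_def1; lra.
      - exfalso. assert (tau <= tau - d); [|lra]. apply Hlub. intros t Ht.
        apply Rnot_lt_le. intros Hlt. apply Hn. exists t. auto. }
    destruct (Req_dec tau 1) as [Et|Nt].
    + exists (w0 :: nil). split. apply ch1; auto. rewrite <- Et. auto.
      split. constructor. intros []. constructor.
      split. intros w [<-|[]]; auto.
      intros w [<-|[]]. exists a. split; auto; lra.
    + set (Ws' := remove (list_eq_dec Nat.eq_dec) w0 Ws).
      assert (Hafter : forall t, tau < t <= 1 -> exists w, In w Ws' /\ cl w (g t)).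
      { intros t Ht. destruct (Hcov t ltac:(lra)) as [w [Hw Hcw]].
        exists w. split; auto. apply in_in_remove; auto. intros ->.
        assert (t <= tau) by (apply Hub; split; auto; lra). lra. }
      assert (Hcov' : forall t, tau <= t <= 1 -> exists w, In w Ws' /\ cl w (g t)).
      { intros t Ht. destruct (Req_dec t tau) as [->|Ne]; [|apply Hafter; lra].
        apply NNPP. intros Hn.
        assert (Hsep : forall w, In w Ws' -> exists e, 0 < e /\ forall q, cl w q -> e <= dist2 (g tau) q).
        { intros w Hw. assert (~ cl w (g tau)) by (intros Hcw; apply Hn; exists w; auto).
          apply NNPP. intros Hne. apply H. apply (Hcl w). intros e He.
          apply NNPP. intros Hno. apply Hne. exists e. split; auto. intros q Hq.
          apply Rnot_lt_le. intros Hlt. apply Hno. exists q. auto. }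
        destruct (finite_min (fun w e => forall q, cl w q -> e <= dist2 (g tau) q) Ws') as [e [He Hall]].
        { intros w e e' He' Hw q Hq. specialize (Hw q Hq). lra. }
        exact Hsep.
        destruct (Hc tau ltac:(lra) e He) as [d [Hd Hcd]].
        set (s := Rmin (tau + d / 2) 1).
        assert (Hs1 : tau < s) by (apply Rmin_glb_lt; lra).
        assert (Hs2 : s <= 1) by apply Rmin_r.
        assert (Hs3 : s <= tau + d / 2) by apply Rmin_l.
        destruct (Hafter s ltac:(lra)) as [w [Hw Hcw]].
        specialize (Hall w Hw _ Hcw). rewrite dist2_sym in Hall.
        assert (dist2 (g s) (g tau) < e) by (apply Hcd; [lra|apply Rabs_def1; lra]). lra. }
      assert (Hlen' : (length Ws' <= n)%nat).
      { pose proof (remove_length_lt (list_eq_dec Nat.eq_dec) Ws w0 Hw0). unfold Ws'. lia. }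
      destruct (IHn Ws' tau Hlen' ltac:(lra) Hcov') as [l [Hch [Hnd [Hinc Hmeet]]]].
      exists (w0 :: l). split. apply (chS cl w0 l (g a) (g tau) (g 1)); auto.
      split. constructor; auto. intros Hin. apply Hinc in Hin. apply in_remove in Hin. tauto.
      split. intros w [<-|Hw]; auto. apply Hinc in Hw. apply in_remove in Hw. tauto.
      intros w [<-|Hw]. exists a. split; auto; lra.
      destruct (Hmeet w Hw) as [t [Ht Hct]]. exists t. split; auto; lra.
Qed.

Definition Good (k N : nat) (c : nat -> pt) (K : pt -> Prop) (cn : nat -> nat -> pt) (Kn : nat -> pt -> Prop) : Prop :=
  (forall n, is_USC k N (cn n) (Kn n)) /\
  (forall i, (i < N)%nat -> forall z : pt, pt_conv (fun n => Psi k (cn n i) z) (Psi k (c i) z)) /\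
  hausdorff_conv Kn K /\ geodist_equicont Kn.

Definition dn (Kn : nat -> pt -> Prop) (n : nat) (p q : pt) : R := real (geodist (Kn n) p q).

Lemma conv_comb a b t : 0 <= t <= 1 -> 0 <= a <= 1 -> 0 <= b <= 1 -> 0 <= a + t * (b - a) <= 1.
Proof.
  intros Ht Ha Hb. replace (a + t * (b - a)) with ((1 - t) * a + t * b) by ring.
  assert (0 <= (1 - t) * a) by (apply Rmult_le_pos; lra).
  assert (0 <= t * b) by (apply Rmult_le_pos; lra).
  assert ((1 - t) * a <= (1 - t) * 1) by (apply Rmult_le_compat_l; lra).
  assert (t * b <= t * 1) by (apply Rmult_le_compat_l; lra). lra.
Qed.

Section Seq.
Variables (k N : nat) (c : nat -> pt) (K : pt -> Prop).
Hypothesis HU : is_USC k N c K.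
Variables (cn : nat -> nat -> pt) (Kn : nat -> pt -> Prop).
Hypothesis HG : Good k N c K cn Kn.

Let HUn : forall n, is_USC k N (cn n) (Kn n). Proof. destruct HG; auto. Qed.
Let Hk1 := U_k1 k N c K HU.
Let Hk3 := U_INRk k N c K HU.

Lemma Hcv : forall i, (i < N)%nat -> forall z : pt, pt_conv (fun n => Psi k (cn n i) z) (Psi k (c i) z).
Proof. destruct HG as [_ [H _]]; auto. Qed.
Lemma Hhd : hausdorff_conv Kn K. Proof. destruct HG as [_ [_ [H _]]]; auto. Qed.
Lemma Heq : geodist_equicont Kn. Proof. destruct HG as [_ [_ [_ H]]]; auto. Qed.

Lemma dist4_diag x y : dist4 x y x y = 0.
Proof. unfold dist4. replace ((fst x - fst x) ^ 2 + (snd x - snd x) ^ 2 + (fst y - fst y) ^ 2 + (snd y - snd y) ^ 2) with 0 by ring. apply sqrt_0. Qed.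

Lemma dn_fin n p q : Kn n p -> Kn n q -> geodist (Kn n) p q = Finite (dn Kn n p q).
Proof.
  intros Hp Hq. destruct (Heq 1 Rlt_0_1) as [eta [Heta H]].
  destruct (H n p q p q Hp Hq Hp Hq) as [a [b [Ha _]]]. rewrite dist4_diag; auto.
  unfold dn. rewrite Ha. auto.
Qed.

Lemma dn_nonneg n p q : Kn n p -> Kn n q -> 0 <= dn Kn n p q.
Proof. intros Hp Hq. pose proof (geo_nonneg (Kn n) p q). rewrite dn_fin in H by auto. auto. Qed.

Lemma dn_refl n p : Kn n p -> dn Kn n p p = 0.
Proof. intros Hp. unfold dn. rewrite geo_refl; auto. Qed.

Lemma dn_tri n p q r : Kn n p -> Kn n q -> Kn n r -> dn Kn n p r <= dn Kn n p q + dn Kn n q r.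
Proof.
  intros Hp Hq Hr. pose proof (geo_tri (Kn n) p q r _ _ (dn_fin n p q Hp Hq) (dn_fin n q r Hq Hr)).
  rewrite dn_fin in H by auto. auto.
Qed.

Lemma dn_sym n p q : Kn n p -> Kn n q -> dn Kn n p q = dn Kn n q p.
Abort.

Lemma Kn_self n i z : (i < N)%nat -> Kn n z -> Kn n (Psi k (cn n i) z).
Proof. intros. apply (U_K_self k N (cn n) (Kn n) (HUn n)); auto. Qed.

Lemma dn_scale n i p q : (i < N)%nat -> Kn n p -> Kn n q ->
  dn Kn n (Psi k (cn n i) p) (Psi k (cn n i) q) <= dn Kn n p q / INR k.
Proof.
  intros Hi Hp Hq. pose proof (geo_scale (Kn n) k (cn n i) p q _ Hk1 (fun z Hz => Kn_self n i z Hi Hz) (dn_fin n p q Hp Hq)).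
  rewrite dn_fin in H by (apply Kn_self; auto). auto.
Qed.

Lemma dn_scalew n w p q : okw N w -> Kn n p -> Kn n q ->
  dn Kn n (psiw k (cn n) w p) (psiw k (cn n) w q) <= rw k (length w) * dn Kn n p q.
Proof.
  intros Hok Hp Hq. induction w as [|i w IH]; simpl.
  - unfold rw; simpl. lra.
  - assert (Hi : (i < N)%nat) by (apply Hok; left; auto).
    assert (Hokw : okw N w) by (intros j Hj; apply Hok; right; auto).
    eapply Rle_trans. apply dn_scale; auto; apply (psiw_K k N (cn n) (Kn n) (HUn n)); auto.
    rewrite rw_S. specialize (IH Hokw). unfold Rdiv. rewrite Rmult_assoc, (Rmult_comm (/ INR k)), <- Rmult_assoc.
    apply Rmult_le_compat_r. left; apply Rinv_0_lt_compat; lra. auto.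
Qed.

Lemma dn_small e : 0 < e -> exists eta, 0 < eta /\
  forall n p q, Kn n p -> Kn n q -> dist2 p q < eta -> dn Kn n p q <= e.
Proof.
  intros He. destruct (Heq e He) as [eta [Heta H]]. exists eta. split; auto.
  intros n p q Hp Hq Hd. destruct (H n p q q q Hp Hq Hq Hq) as [a [b [Ha [Hb Hab]]]].
  - unfold dist4. replace ((fst p - fst q) ^ 2 + (snd p - snd q) ^ 2 + (fst q - fst q) ^ 2 + (snd q - snd q) ^ 2)
      with ((fst p - fst q) ^ 2 + (snd p - snd q) ^ 2) by ring. exact Hd.
  - rewrite geo_refl in Hb by auto. injection Hb as <-. unfold dn. rewrite Ha. simpl.
    rewrite Rminus_0_r in Hab. apply Rabs_le_between in Hab. lra.
Qed.

Lemma dn_seg n a b : (forall t, 0 <= t <= 1 -> Kn n (seg a b t)) -> dn Kn n a b <= dist2 a b.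
Proof.
  intros H. pose proof (geo_seg (Kn n) a b H).
  assert (Ha : Kn n a) by (replace a with (seg a b 0) by (unfold seg; destruct a; simpl; f_equal; ring); apply H; lra).
  assert (Hb : Kn n b) by (replace b with (seg a b 1) by (unfold seg; destruct a, b; simpl; f_equal; ring); apply H; lra).
  rewrite dn_fin in H0 by auto. auto.
Qed.

Lemma bdK n u : bd u -> Kn n u.
Proof. apply (bd_K k N (cn n) (Kn n) (HUn n)). Qed.

Lemma dn_bd_O n u : bd u -> dn Kn n u O2 <= 4.
Proof.
  intros Hu. pose proof Hu as [[[A1 A2] [B1 B2]] Hp]. destruct u as [x y]. simpl in *.
  assert (Hleft : forall y0, 0 <= y0 <= 1 -> dn Kn n (0, y0) O2 <= 2).
  { intros y0 Hy0. eapply Rle_trans. apply dn_seg. intros t Ht. apply bdK.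
    unfold seg, O2; simpl. split. unfold unit_square; simpl. split. lra. apply conv_comb; lra. simpl; left; ring.
    eapply Rle_trans. apply dist2_le_coords. unfold O2; simpl. rewrite !Rminus_0_r, Rabs_R0, Rabs_right; lra. }
  assert (Hbot : forall x0, 0 <= x0 <= 1 -> dn Kn n (x0, 0) O2 <= 2).
  { intros x0 Hx0. eapply Rle_trans. apply dn_seg. intros t Ht. apply bdK.
    unfold seg, O2; simpl. split. unfold unit_square; simpl. split. apply conv_comb; lra. lra. simpl; right; right; left; ring.
    eapply Rle_trans. apply dist2_le_coords. unfold O2; simpl. rewrite !Rminus_0_r, Rabs_R0, Rabs_right; lra. }
  destruct Hp as [ -> | [ -> | [ -> | -> ]]].
  - pose proof (Hleft y). lra.
  -
    eapply Rle_trans. apply (dn_tri n _ (1, 0)); try apply bdK; auto.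
    split; [unfold unit_square; simpl; lra|simpl; auto]. apply bd_O2.
    assert (dn Kn n (1, y) (1, 0) <= 2).
    { eapply Rle_trans. apply dn_seg. intros t Ht. apply bdK.
      unfold seg; simpl. split. unfold unit_square; simpl. split. lra. apply conv_comb; lra. simpl; right; left; ring.
      eapply Rle_trans. apply dist2_le_coords. simpl. rewrite Rminus_diag_eq, Rabs_R0 by auto. rewrite Rminus_0_r, Rabs_right; lra. }
    pose proof (Hbot 1 ltac:(lra)). lra.
  - pose proof (Hbot x). lra.
  - eapply Rle_trans. apply (dn_tri n _ (0, 1)); try apply bdK; auto.
    split; [unfold unit_square; simpl; lra|simpl; auto]. apply bd_O2.
    assert (dn Kn n (x, 1) (0, 1) <= 2).
    { eapply Rle_trans. apply dn_seg. intros t Ht. apply bdK.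
      unfold seg; simpl. split. unfold unit_square; simpl. split. apply conv_comb; lra. lra. simpl; right; right; right; ring.
      eapply Rle_trans. apply dist2_le_coords. simpl. rewrite (Rminus_diag_eq 1 1), Rabs_R0 by auto. rewrite Rminus_0_r, Rabs_right; lra. }
    pose proof (Hleft 1 ltac:(lra)). lra.
Qed.

Lemma psiw_conv w z : okw N w -> pt_conv (fun n => psiw k (cn n) w z) (psiw k c w z).
Proof.
  induction w as [|i w IH]; intros Hok.
  - intros e He. exists O. intros. simpl. rewrite dist2_refl. auto.
  - assert (Hi : (i < N)%nat) by (apply Hok; left; auto).
    assert (Hokw : okw N w) by (intros j Hj; apply Hok; right; auto).
    intros e He. destruct (IH Hokw (e/2) ltac:(lra)) as [M1 HM1].
    destruct (Hcv i Hi (psiw k c w z) (e/2) ltac:(lra)) as [M2 HM2].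
    exists (max M1 M2). intros n Hn. simpl.
    eapply Rle_lt_trans. apply (dist2_tri _ (Psi k (cn n i) (psiw k c w z))).
    rewrite dist2_Psi by lia.
    specialize (HM1 n ltac:(lia)). specialize (HM2 n ltac:(lia)).
    assert (dist2 (psiw k (cn n) w z) (psiw k c w z) / INR k <= dist2 (psiw k (cn n) w z) (psiw k c w z)).
    { unfold Rdiv. pose proof (dist2_nonneg (psiw k (cn n) w z) (psiw k c w z)).
      rewrite <- (Rmult_1_r (dist2 (psiw k (cn n) w z) (psiw k c w z))) at 2.
      apply Rmult_le_compat_l; auto. rewrite <- Rinv_1. apply Rinv_le_contravar; lra. }
    lra.
Qed.

Lemma approx_cell w z : okw N w -> K z -> forall e, 0 < e ->
  exists n0, forall n, (n0 <= n)%nat -> exists a, Kn n a /\ dist2 (psiw k (cn n) w a) (psiw k c w z) < e.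
Proof.
  intros Hok Hz e He.
  destruct (Hhd (e/2) ltac:(lra)) as [M1 HM1].
  destruct (psiw_conv w z Hok (e/2) ltac:(lra)) as [M2 HM2].
  exists (max M1 M2). intros n Hn.
  destruct (HM1 n ltac:(lia)) as [_ H2]. destruct (H2 z Hz) as [a [Ha Hd]].
  exists a. split; auto.
  eapply Rle_lt_trans. apply (dist2_tri _ (psiw k (cn n) w z)).
  rewrite dist2_psiw by auto. pose proof (rw_le1 k (length w) Hk1). pose proof (rw_pos k (length w) Hk1).
  specialize (HM2 n ltac:(lia)). simpl in HM2.
  assert (rw k (length w) * dist2 a z <= dist2 a z).
  { pose proof (dist2_nonneg a z). rewrite <- (Rmult_1_l (dist2 a z)) at 2. apply Rmult_le_compat_r; auto. }
  lra.
Qed.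

End Seq.

Definition revc (g : R -> pt) (t : R) : pt := g (1 - t).

Lemma poly_sum_rev g t m : poly_sum g t m = poly_sum g (fun j => t (m - j)%nat) m.
Proof.
  revert t. induction m; intros t. simpl. auto.
  change (poly_sum g t (S m)) with (poly_sum g t m + dist2 (g (t m)) (g (t (S m)))).
  change (poly_sum g (fun j => t (S m - j)%nat) (S m)) with (poly_sum g (fun j => t (S m - j)%nat) (1 + m)).
  rewrite poly_sum_split. simpl (poly_sum g (fun j : nat => t (S m - j)%nat) 1).
  rewrite IHm. replace (S m - 0)%nat with (S m) by lia. replace (S m - 1)%nat with m by lia.
  change (poly_sum g (fun j : nat => t (S m - (1 + j))%nat) m) with (poly_sum g (fun j : nat => t (m - j)%nat) m).
  rewrite Nat.sub_0_r. rewrite dist2_sym. ring.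
Qed.

Lemma revc_len g L : curve_length g = Finite L -> Rbar_le (curve_length (revc g)) (Finite L).
Proof.
  intros HL. apply len_le. intros t m [T0 [T1 Tinc]].
  unfold revc. rewrite (poly_sum_comp g (fun s => 1 - s)). rewrite poly_sum_rev.
  apply len_ub; auto. split; [|split].
  - simpl. rewrite Nat.sub_0_r. rewrite T1. ring.
  - rewrite Nat.sub_diag. rewrite T0. ring.
  - intros j Hj. replace (m - j)%nat with (S (m - S j)) by lia. pose proof (Tinc (m - S j)%nat ltac:(lia)). lra.
Qed.

Lemma revc_curve A p q g : curve_in A p q g -> curve_in A q p (revc g).
Proof.
  intros [G0 [G1 [GA Gc]]]. unfold revc. split; [|split; [|split]].
  - rewrite Rminus_0_r. auto.
  - rewrite Rminus_diag_eq by auto. auto.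
  - intros t Ht. apply GA. lra.
  - intros t Ht e He. destruct (Gc (1 - t) ltac:(lra) e He) as [d [Hd H]]. exists d. split; auto.
    intros s Hs Hst. apply H. lra. replace (1 - s - (1 - t)) with (- (s - t)) by ring. rewrite Rabs_Ropp. auto.
Qed.

Lemma geo_sym_le A p q : Rbar_le (geodist A p q) (geodist A q p).
Proof.
  unfold geodist at 2. destruct (Glb_Rbar_correct (LenSet A q p)) as [_ Hg]. apply Hg.
  intros L [g [Hc HL]]. apply (geo_le_curve' A p q (revc g)). apply revc_curve; auto. apply revc_len; auto.
Qed.

Lemma geo_sym A p q : geodist A p q = geodist A q p.
Proof. apply Rbar_le_antisym; apply geo_sym_le. Qed.

Lemma dn_sym Kn n p q : dn Kn n p q = dn Kn n q p.
Proof. unfold dn. rewrite geo_sym. auto. Qed.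

Lemma fin_exists_R (N : nat) (P : nat -> R -> Prop) :
  (forall j B B', B <= B' -> P j B -> P j B') ->
  (forall j, (j < N)%nat -> exists B, P j B) -> exists B, forall j, (j < N)%nat -> P j B.
Proof.
  intros Hm. induction N; intros H.
  - exists 0. intros; lia.
  - destruct IHN as [B1 HB1]. intros; apply H; lia.
    destruct (H N ltac:(lia)) as [B2 HB2].
    exists (Rmax B1 B2). intros j Hj. destruct (Nat.eq_dec j N) as [->|Hne].
    + apply (Hm N B2); auto. apply Rmax_r.
    + apply (Hm j B1); auto. apply Rmax_l. apply HB1; lia.
Qed.

Lemma fin_exists_nat (N : nat) (P : nat -> nat -> Prop) :
  (forall j n n', (n <= n')%nat -> P j n -> P j n') ->
  (forall j, (j < N)%nat -> exists n, P j n) -> exists n, forall j, (j < N)%nat -> P j n.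
Proof.
  intros Hm. induction N; intros H.
  - exists O. intros; lia.
  - destruct IHN as [B1 HB1]. intros; apply H; lia.
    destruct (H N ltac:(lia)) as [B2 HB2].
    exists (max B1 B2). intros j Hj. destruct (Nat.eq_dec j N) as [->|Hne].
    + apply (Hm N B2); auto. lia.
    + apply (Hm j B1); auto. lia. apply HB1; lia.
Qed.

Lemma fin_min_nat (P : nat -> R -> Prop) (l : list nat) :
  (forall w e e', 0 < e' <= e -> P w e -> P w e') ->
  (forall w, In w l -> exists e, 0 < e /\ P w e) ->
  exists e, 0 < e /\ forall w, In w l -> P w e.
Proof.
  intros Hmono. induction l as [|w l IH]; intros H.
  - exists 1. split. lra. intros w [].
  - destruct (H w (or_introl eq_refl)) as [e1 [He1 Hw]].
    destruct IH as [e2 [He2 Hr]]. intros; apply H; right; auto.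
    exists (Rmin e1 e2). split. apply Rmin_glb_lt; auto.
    intros w' [Ew|Hw']. subst w'. apply (Hmono w e1). split. apply Rmin_glb_lt; auto. apply Rmin_l. auto.
    apply (Hmono w' e2). split. apply Rmin_glb_lt; auto. apply Rmin_r. auto.
Qed.

Section Reach.
Variables (k N : nat) (c : nat -> pt) (K : pt -> Prop).
Hypothesis HU : is_USC k N c K.
Let Hk3 := U_INRk k N c K HU.
Let Hk1 := U_k1 k N c K HU.

Lemma cell_box i p : cell k c i p ->
  fst (c i) <= fst p <= fst (c i) + / INR k /\ snd (c i) <= snd p <= snd (c i) + / INR k.
Proof.
  intros [u [[[U1 U2] [V1 V2]] ->]]. unfold Psi; simpl.
  assert (0 <= fst u / INR k) by (apply Rdiv_le_0_compat; lra).
  assert (0 <= snd u / INR k) by (apply Rdiv_le_0_compat; lra).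
  assert (fst u / INR k <= / INR k) by (unfold Rdiv; rewrite <- (Rmult_1_l (/ INR k)) at 2; apply Rmult_le_compat_r; [left; apply Rinv_0_lt_compat; lra|lra]).
  assert (snd u / INR k <= / INR k) by (unfold Rdiv; rewrite <- (Rmult_1_l (/ INR k)) at 2; apply Rmult_le_compat_r; [left; apply Rinv_0_lt_compat; lra|lra]).
  lra.
Qed.

Lemma not_cell_sep i p : ~ cell k c i p -> exists e, 0 < e /\ forall q, dist2 p q < e -> ~ cell k c i q.
Proof.
  intros Hn.
  assert (Hb : ~ (fst (c i) <= fst p <= fst (c i) + / INR k /\ snd (c i) <= snd p <= snd (c i) + / INR k)).
  { intros [H1 H2]. apply Hn. apply (in_cell k N c K HU); auto. }
  destruct (Rlt_dec (fst p) (fst (c i))) as [L1|L1].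
  { exists (fst (c i) - fst p). split. lra. intros q Hq Hc. apply cell_box in Hc.
    pose proof (coord1_le p q). apply Rabs_le_between in H. lra. }
  destruct (Rlt_dec (fst (c i) + / INR k) (fst p)) as [L2|L2].
  { exists (fst p - (fst (c i) + / INR k)). split. lra. intros q Hq Hc. apply cell_box in Hc.
    pose proof (coord1_le p q). apply Rabs_le_between in H. lra. }
  destruct (Rlt_dec (snd p) (snd (c i))) as [L3|L3].
  { exists (snd (c i) - snd p). split. lra. intros q Hq Hc. apply cell_box in Hc.
    pose proof (coord2_le p q). apply Rabs_le_between in H. lra. }
  destruct (Rlt_dec (snd (c i) + / INR k) (snd p)) as [L4|L4].
  { exists (snd p - (snd (c i) + / INR k)). split. lra. intros q Hq Hc. apply cell_box in Hc.
    pose proof (coord2_le p q). apply Rabs_le_between in H. lra. }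
  exfalso. apply Hb. lra.
Qed.

Definition adjK i j := (i < N)%nat /\ (j < N)%nat /\ i <> j /\ exists z, cell k c i z /\ cell k c j z.

Inductive reach (i0 : nat) : nat -> Prop :=
| rch0 : reach i0 i0
| rchS : forall i j, reach i0 i -> adjK i j -> reach i0 j.

Lemma all_reach i0 : (i0 < N)%nat -> forall j, (j < N)%nat -> reach i0 j.
Proof.
  intros Hi0. apply NNPP. intros Hn. apply not_all_ex_not in Hn. destruct Hn as [j1 Hj1].
  apply imply_to_and in Hj1. destruct Hj1 as [Hj1N Hj1].
  pose proof HU as HU'. destruct HU' as [_ [_ [_ [_ [Hconn _]]]]].
  set (U := fun p => forall j, (j < N)%nat -> ~ reach i0 j -> ~ cell k c j p).
  set (V := fun p => forall j, (j < N)%nat -> reach i0 j -> ~ cell k c j p).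
  assert (HUc : forall j p, (j < N)%nat -> reach i0 j -> cell k c j p -> U p).
  { intros j p Hj Hr Hc j' Hj' Hr' Hc'. apply Hr'. destruct (Nat.eq_dec j j') as [<-|Hne]; auto.
    apply (rchS i0 j j'); auto. split; auto. split; auto. split; auto. exists p; auto. }
  assert (HVc : forall j p, (j < N)%nat -> ~ reach i0 j -> cell k c j p -> V p).
  { intros j p Hj Hr Hc j' Hj' Hr' Hc'. apply Hr. destruct (Nat.eq_dec j' j) as [<-|Hne]; auto.
    apply (rchS i0 j' j); auto. split; auto. split; auto. split; auto. exists p; auto. }
  apply Hconn. exists U, V. split; [|split; [|split; [|split; [|split]]]].
  - intros p Hp.
    destruct (fin_min_nat (fun j e => (j < N)%nat -> ~ reach i0 j -> forall q, dist2 p q < e -> ~ cell k c j q) (seq 0 N)) as [e [He Hall]].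
    + intros w e e' He' H Hw Hr q Hq. apply (H Hw Hr q). lra.
    + intros j _. destruct (classic (cell k c j p)) as [Hc|Hc].
      * exists 1. split. lra. intros Hj Hr. exfalso. apply (Hp j Hj Hr Hc).
      * destruct (not_cell_sep j p Hc) as [e [He H]]. exists e. split; auto.
    + exists e. split; auto. intros q Hq j Hj Hr. apply (Hall j); auto. apply in_seq; lia.
  - intros p Hp.
    destruct (fin_min_nat (fun j e => (j < N)%nat -> reach i0 j -> forall q, dist2 p q < e -> ~ cell k c j q) (seq 0 N)) as [e [He Hall]].
    + intros w e e' He' H Hw Hr q Hq. apply (H Hw Hr q). lra.
    + intros j _. destruct (classic (cell k c j p)) as [Hc|Hc].
      * exists 1. split. lra. intros Hj Hr. exfalso. apply (Hp j Hj Hr Hc).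
      * destruct (not_cell_sep j p Hc) as [e [He H]]. exists e. split; auto.
    + exists e. split; auto. intros q Hq j Hj Hr. apply (Hall j); auto. apply in_seq; lia.
  - intros p [j [Hj Hc]]. destruct (classic (reach i0 j)) as [Hr|Hr].
    + left. eapply HUc; eauto.
    + right. eapply HVc; eauto.
  - exists (Psi k (c i0) O2). assert (Hc : cell k c i0 (Psi k (c i0) O2)) by (exists O2; split; auto; apply sq_O2).
    split. exists i0; auto. apply (HUc i0 _ Hi0 (rch0 i0) Hc).
  - exists (Psi k (c j1) O2). assert (Hc : cell k c j1 (Psi k (c j1) O2)) by (exists O2; split; auto; apply sq_O2).
    split. exists j1; auto. apply (HVc j1 _ Hj1N Hj1 Hc).
  - intros p [j [Hj Hc]] HpU HpV. destruct (classic (reach i0 j)) as [Hr|Hr].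
    + apply (HpV j Hj Hr Hc).
    + apply (HpU j Hj Hr Hc).
Qed.

Lemma corner_cell : exists i u, (i < N)%nat /\ bd u /\ Psi k (c i) u = O2.
Proof.
  destruct (FL_bot k N c K HU 0 ltac:(lra)) as [i [Hi [u [Hu Eu]]]].
  exists i, u. split; auto. split; auto.
  pose proof (U_c_bounds k N c K HU i Hi). destruct Hu as [[? ?] [? ?]].
  unfold Psi in Eu. injection Eu as E1 E2.
  split. split; split; auto. left. apply (div_eq0 k N c K HU (fst u) (fst (c i))); lra.
Qed.

End Reach.

Section Seq2.
Variables (k N : nat) (c : nat -> pt) (K : pt -> Prop).
Hypothesis HU : is_USC k N c K.
Variables (cn : nat -> nat -> pt) (Kn : nat -> pt -> Prop).
Hypothesis HG : Good k N c K cn Kn.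
Let Hk1 := U_k1 k N c K HU.
Let Hk3 := U_INRk k N c K HU.

Lemma cellbd n i u v : (i < N)%nat -> bd u -> bd v ->
  dn Kn n (Psi k (cn n i) u) (Psi k (cn n i) v) <= 8.
Proof.
  intros Hi Hu Hv.
  pose proof (bdK k N c K cn Kn HG n u Hu). pose proof (bdK k N c K cn Kn HG n v Hv).
  eapply Rle_trans. apply (dn_scale k N c K HU cn Kn HG); auto.
  assert (dn Kn n u v <= 8).
  { eapply Rle_trans. apply (dn_tri k N c K cn Kn HG n u O2 v); auto. apply (bdK k N c K cn Kn HG n); apply bd_O2.
    rewrite (dn_sym Kn n O2 v). pose proof (dn_bd_O k N c K cn Kn HG n u Hu). pose proof (dn_bd_O k N c K cn Kn HG n v Hv). lra. }
  pose proof (dn_nonneg k N c K cn Kn HG n u v H H0).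
  apply (Rle_trans _ (dn Kn n u v)); auto.
  unfold Rdiv. rewrite <- (Rmult_1_r (dn Kn n u v)) at 2. apply Rmult_le_compat_l; auto.
  rewrite <- Rinv_1. apply Rinv_le_contravar; lra.
Qed.

Lemma jump (p q : nat -> pt) z : pt_conv p z -> pt_conv q z ->
  (forall n, Kn n (p n)) -> (forall n, Kn n (q n)) ->
  forall e, 0 < e -> exists n0, forall n, (n0 <= n)%nat -> dn Kn n (p n) (q n) <= e.
Proof.
  intros Hp Hq Hpk Hqk e He. destruct (dn_small k N c K cn Kn HG e He) as [eta [Heta H]].
  destruct (Hp (eta/2) ltac:(lra)) as [M1 HM1]. destruct (Hq (eta/2) ltac:(lra)) as [M2 HM2].
  exists (max M1 M2). intros n Hn. apply H; auto.
  eapply Rle_lt_trans. apply (dist2_tri _ z). rewrite (dist2_sym z).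
  specialize (HM1 n ltac:(lia)). specialize (HM2 n ltac:(lia)). lra.
Qed.

End Seq2.

Section Unif.
Variables (k N : nat) (c : nat -> pt) (K : pt -> Prop).
Hypothesis HU : is_USC k N c K.
Let Hk1 := U_k1 k N c K HU.
Let Hk3 := U_INRk k N c K HU.

Lemma R1_reach istar ustar : (istar < N)%nat -> bd ustar -> Psi k (c istar) ustar = O2 ->
  forall j, reach k N c istar j -> (j < N)%nat /\ exists B, forall cn Kn, Good k N c K cn Kn ->
    exists n0, forall n, (n0 <= n)%nat -> forall u, bd u -> dn Kn n (Psi k (cn n j) u) O2 <= B.
Proof.
  intros Hi Hus Hc j Hr. induction Hr as [|i j Hr IH Hadj].
  - split; auto. exists 9. intros cn Kn HG.
    destruct (jump k N c K HU cn Kn HG (fun n => Psi k (cn n istar) ustar) (fun n => O2) O2) with (e := 1) as [n0 Hn0].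
    + rewrite <- Hc. apply (Hcv k N c K cn Kn HG); auto.
    + intros e He. exists O. intros. rewrite dist2_refl. auto.
    + intros n. apply (Kn_self k N c K cn Kn HG); auto. apply (bdK k N c K cn Kn HG); auto.
    + intros n. apply (bdK k N c K cn Kn HG); apply bd_O2.
    + lra.
    + exists n0. intros n Hn u Hu. specialize (Hn0 n Hn). simpl in Hn0.
      eapply Rle_trans. apply (dn_tri k N c K cn Kn HG n _ (Psi k (cn n istar) ustar)).
      1,2: apply (Kn_self k N c K cn Kn HG); auto; apply (bdK k N c K cn Kn HG); auto.
      apply (bdK k N c K cn Kn HG); apply bd_O2.
      pose proof (cellbd k N c K HU cn Kn HG n istar u ustar Hi Hu Hus). lra.
  - destruct IH as [HiN [B HB]]. destruct Hadj as [_ [HjN [Hij [z [Hzi Hzj]]]]].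
    split; auto. exists (B + 9). intros cn Kn HG.
    destruct (junction k N c K HU j i z HjN HiN (not_eq_sym Hij) Hzj Hzi) as [v [Hv Ev]].
    destruct (junction k N c K HU i j z HiN HjN Hij Hzi Hzj) as [u' [Hu' Eu']].
    destruct (HB cn Kn HG) as [n1 Hn1].
    destruct (jump k N c K HU cn Kn HG (fun n => Psi k (cn n j) v) (fun n => Psi k (cn n i) u') z) with (e := 1) as [n2 Hn2].
    + rewrite Ev. apply (Hcv k N c K cn Kn HG); auto.
    + rewrite Eu'. apply (Hcv k N c K cn Kn HG); auto.
    + intros n. apply (Kn_self k N c K cn Kn HG); auto. apply (bdK k N c K cn Kn HG); auto.
    + intros n. apply (Kn_self k N c K cn Kn HG); auto. apply (bdK k N c K cn Kn HG); auto.
    + lra.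
    + exists (max n1 n2). intros n Hn u Hu.
      specialize (Hn1 n ltac:(lia) u' Hu'). specialize (Hn2 n ltac:(lia)). simpl in Hn2.
      assert (KK : forall i0 w, (i0 < N)%nat -> bd w -> Kn n (Psi k (cn n i0) w)).
      { intros. apply (Kn_self k N c K cn Kn HG); auto. apply (bdK k N c K cn Kn HG); auto. }
      eapply Rle_trans. apply (dn_tri k N c K cn Kn HG n _ (Psi k (cn n j) v)); auto.
      apply (bdK k N c K cn Kn HG); apply bd_O2.
      eapply Rle_trans. apply Rplus_le_compat_l. apply (dn_tri k N c K cn Kn HG n _ (Psi k (cn n i) u')); auto.
      apply (bdK k N c K cn Kn HG); apply bd_O2.
      pose proof (cellbd k N c K HU cn Kn HG n j u v HjN Hu Hv). lra.
Qed.

Lemma R1_bound : exists R1, 0 <= R1 /\ forall cn Kn, Good k N c K cn Kn ->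
  exists n0, forall n, (n0 <= n)%nat -> forall i u, (i < N)%nat -> bd u ->
    dn Kn n (Psi k (cn n i) u) O2 <= R1.
Proof.
  destruct (corner_cell k N c K HU) as [istar [ustar [Hi [Hus Hc]]]].
  destruct (fin_exists_R N (fun j B => forall cn Kn, Good k N c K cn Kn ->
    exists n0, forall n, (n0 <= n)%nat -> forall u, bd u -> dn Kn n (Psi k (cn n j) u) O2 <= B)) as [B HB].
  - intros j B B' HBB' H cn Kn HG. destruct (H cn Kn HG) as [n0 Hn0]. exists n0. intros n Hn u Hu.
    specialize (Hn0 n Hn u Hu). lra.
  - intros j Hj. destruct (R1_reach istar ustar Hi Hus Hc j (all_reach k N c K HU istar Hi j Hj)) as [_ H]. exact H.
  - exists (Rmax B 0). split. apply Rmax_r. intros cn Kn HG.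
    destruct (fin_exists_nat N (fun j n0 => forall n, (n0 <= n)%nat -> forall u, bd u -> dn Kn n (Psi k (cn n j) u) O2 <= B)) as [n0 Hn0].
    + intros j n n' Hnn' H m Hm. apply H. lia.
    + intros j Hj. apply (HB j Hj cn Kn HG).
    + exists n0. intros n Hn i u Hi' Hu. eapply Rle_trans. apply (Hn0 i Hi' n Hn u Hu). apply Rmax_l.
Qed.

Lemma D0_bound : exists D0, 0 < D0 /\ forall cn Kn, Good k N c K cn Kn ->
  exists n0, forall n, (n0 <= n)%nat -> forall a b, Kn n a -> Kn n b -> dn Kn n a b <= D0.
Proof.
  destruct R1_bound as [R1 [HR1 HR]].
  exists (2 + 4 * R1). split. lra. intros cn Kn HG.
  destruct (HR cn Kn HG) as [n0 Hn0]. exists n0. intros n Hn.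
  pose proof (proj1 HG n) as HUn.
  assert (HO : Kn n O2) by (apply (bdK k N c K cn Kn HG); apply bd_O2).
  assert (HT : forall w, okw N w -> dn Kn n (psiw k (cn n) w O2) O2 <= 2 * R1).
  { induction w as [|i w IH]; intros Hok; simpl.
    - rewrite (dn_refl Kn n O2 HO). lra.
    - assert (Hi : (i < N)%nat) by (apply Hok; left; auto).
      assert (Hokw : okw N w) by (intros j Hj; apply Hok; right; auto).
      specialize (IH Hokw).
      assert (HK : Kn n (psiw k (cn n) w O2)) by (apply (psiw_K k N (cn n) (Kn n) HUn); auto).
      eapply Rle_trans. apply (dn_tri k N c K cn Kn HG n _ (Psi k (cn n i) O2)); auto.
      apply (Kn_self k N c K cn Kn HG); auto. apply (Kn_self k N c K cn Kn HG); auto.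
      pose proof (dn_scale k N c K HU cn Kn HG n i _ _ Hi HK HO).
      pose proof (Hn0 n Hn i O2 Hi bd_O2).
      pose proof (dn_nonneg k N c K cn Kn HG n _ _ HK HO).
      assert (dn Kn n (psiw k (cn n) w O2) O2 / INR k <= 2 * R1 / 3).
      { unfold Rdiv. apply (Rle_trans _ (dn Kn n (psiw k (cn n) w O2) O2 * / 3)).
        apply Rmult_le_compat_l; auto. apply Rinv_le_contravar; lra.
        apply Rmult_le_compat_r; lra. }
      lra. }
  assert (Ha : forall a, Kn n a -> dn Kn n a O2 <= 1 + 2 * R1).
  { intros a Ha. destruct (dn_small k N c K cn Kn HG 1 Rlt_0_1) as [eta [Heta Hsm]].
    destruct (rw_small k (eta / 3)) as [m Hm]. pose proof (U_k k N c K HU); lia. lra.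
    destruct (K_decomp k N (cn n) (Kn n) HUn m a Ha) as [w [z [Hw [Hz ->]]]].
    apply allwords_spec in Hw. destruct Hw as [Hl Hok].
    assert (HK : Kn n (psiw k (cn n) w O2)) by (apply (psiw_K k N (cn n) (Kn n) HUn); auto).
    assert (HKz : Kn n (psiw k (cn n) w z)) by (apply (psiw_K k N (cn n) (Kn n) HUn); auto).
    eapply Rle_trans. apply (dn_tri k N c K cn Kn HG n _ (psiw k (cn n) w O2)); auto.
    assert (dn Kn n (psiw k (cn n) w z) (psiw k (cn n) w O2) <= 1).
    { apply Hsm; auto. rewrite dist2_psiw by auto. rewrite Hl.
      pose proof (K_sq k N (cn n) (Kn n) HUn z Hz). pose proof (dist2_square_le z O2 H sq_O2).
      pose proof (rw_pos k m Hk1).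
      apply (Rle_lt_trans _ (rw k m * 2)). apply Rmult_le_compat_l; lra. lra. }
    pose proof (HT w Hok). lra. }
  intros a b HaK HbK. eapply Rle_trans. apply (dn_tri k N c K cn Kn HG n a O2 b); auto.
  rewrite (dn_sym Kn n O2 b). pose proof (Ha a HaK). pose proof (Ha b HbK). lra.
Qed.

End Unif.

Section Main.
Variables (k N : nat) (c : nat -> pt) (K : pt -> Prop).
Hypothesis HU : is_USC k N c K.
Variables (cn : nat -> nat -> pt) (Kn : nat -> pt -> Prop).
Hypothesis HG : Good k N c K cn Kn.
Variables (D0 : R) (nD : nat).
Hypothesis HD0 : 0 < D0.
Hypothesis HD : forall n, (nD <= n)%nat -> forall a b, Kn n a -> Kn n b -> dn Kn n a b <= D0.
Let Hk1 := U_k1 k N c K HU.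
Let Hk3 := U_INRk k N c K HU.
Let HUn : forall n, is_USC k N (cn n) (Kn n). Proof. destruct HG; auto. Qed.

Definition clK (w : list nat) := image (psiw k c w) K.

Lemma single_cell m w p q : okw N w -> length w = m -> clK w p -> clK w q ->
  forall e, 0 < e -> exists eps n0, 0 < eps /\ forall n, (n0 <= n)%nat -> forall a b, Kn n a -> Kn n b ->
    dist2 a p < eps -> dist2 b q < eps -> dn Kn n a b <= rw k m * D0 + 2 * e.
Proof.
  intros Hok Hl [zp [Hzp ->]] [zq [Hzq ->]] e He.
  destruct (dn_small k N c K cn Kn HG e He) as [eta [Heta Hsm]].
  destruct (approx_cell k N c K HU cn Kn HG w zp Hok Hzp (eta/2) ltac:(lra)) as [n1 Hn1].
  destruct (approx_cell k N c K HU cn Kn HG w zq Hok Hzq (eta/2) ltac:(lra)) as [n2 Hn2].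
  exists (eta/2), (max nD (max n1 n2)). split. lra.
  intros n Hn a b Ha Hb Hda Hdb.
  destruct (Hn1 n ltac:(lia)) as [a' [Ha' Hda']]. destruct (Hn2 n ltac:(lia)) as [b' [Hb' Hdb']].
  set (A := psiw k (cn n) w a'). set (B := psiw k (cn n) w b').
  assert (HA : Kn n A) by (apply (psiw_K k N (cn n) (Kn n) (HUn n)); auto).
  assert (HB : Kn n B) by (apply (psiw_K k N (cn n) (Kn n) (HUn n)); auto).
  assert (E1 : dn Kn n a A <= e).
  { apply Hsm; auto. eapply Rle_lt_trans. apply (dist2_tri _ (psiw k c w zp)). rewrite (dist2_sym _ A). fold A in Hda'. lra. }
  assert (E3 : dn Kn n B b <= e).
  { apply Hsm; auto. eapply Rle_lt_trans. apply (dist2_tri _ (psiw k c w zq)). rewrite (dist2_sym _ b). fold B in Hdb'. lra. }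
  assert (E2 : dn Kn n A B <= rw k m * D0).
  { eapply Rle_trans. apply (dn_scalew k N c K HU cn Kn HG); auto. rewrite Hl.
    apply Rmult_le_compat_l. left; apply rw_pos; auto. apply HD; auto. lia. }
  eapply Rle_trans. apply (dn_tri k N c K cn Kn HG n a A b); auto.
  eapply Rle_trans. apply Rplus_le_compat_l. apply (dn_tri k N c K cn Kn HG n A B b); auto.
  lra.
Qed.

Lemma transfer m l p q : chainP clK p l q -> (forall w, In w l -> okw N w /\ length w = m) ->
  forall e, 0 < e -> exists eps n0, 0 < eps /\ forall n, (n0 <= n)%nat -> forall a b, Kn n a -> Kn n b ->
    dist2 a p < eps -> dist2 b q < eps -> dn Kn n a b <= INR (length l) * (rw k m * D0 + 2 * e).
Proof.
  intros Hch Hw. induction Hch as [w p q Hp Hq|w l p z q Hp Hz Hch IH]; intros e He.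
  - destruct (Hw w (or_introl eq_refl)) as [Hok Hl].
    destruct (single_cell m w p q Hok Hl Hp Hq e He) as [eps [n0 [Heps H]]].
    exists eps, n0. split; auto. intros. simpl. rewrite Rmult_1_l. auto.
  - destruct (Hw w (or_introl eq_refl)) as [Hok Hl].
    destruct (IH ltac:(intros; apply Hw; right; auto) e He) as [eps2 [n2 [Heps2 H2]]].
    destruct (single_cell m w p z Hok Hl Hp Hz e He) as [eps1 [n1 [Heps1 H1]]].
    assert (HzK : K z). { destruct Hz as [z' [Hz' ->]]. apply (psiw_K k N c K HU); auto. }
    destruct (Hhd k N c K cn Kn HG (Rmin eps1 eps2) ltac:(apply Rmin_glb_lt; auto)) as [n3 Hn3].
    exists (Rmin eps1 eps2), (max n1 (max n2 n3)). split. apply Rmin_glb_lt; auto. intros n Hn a b Ha Hb Hda Hdb.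
    destruct (Hn3 n ltac:(lia)) as [_ Hh]. destruct (Hh z HzK) as [z' [Hz'K Hdz']].
    pose proof (Rmin_l eps1 eps2). pose proof (Rmin_r eps1 eps2).
    eapply Rle_trans. apply (dn_tri k N c K cn Kn HG n a z' b); auto.
    pose proof (H1 n ltac:(lia) a z' Ha Hz'K ltac:(lra) ltac:(lra)).
    pose proof (H2 n ltac:(lia) z' b Hz'K Hb ltac:(lra) ltac:(lra)).
    simpl length. rewrite S_INR. lra.
Qed.

Lemma main_est x y g L m : K x -> K y -> curve_in K x y g -> curve_length g = Finite L ->
  L <= rw k m -> forall (xn yn : nat -> pt), (forall n, Kn n (xn n)) -> (forall n, Kn n (yn n)) ->
  pt_conv xn x -> pt_conv yn y -> forall e, 0 < e ->
  exists n0, forall n, (n0 <= n)%nat -> dn Kn n (xn n) (yn n) <= 16 * (rw k m * D0 + 2 * e).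
Proof.
  intros Hx Hy Hc HL HLm xn yn Hxn Hyn Cx Cy e He.
  destruct Hc as [G0 [G1 [GK Gc]]].
  destruct (exit_chain g clK Gc (cell_closed k N c K HU) (length (allwords N m)) (allwords N m) 0
    (le_n _) ltac:(lra)) as [l [Hch [Hnd [Hinc Hmeet]]]].
  { intros t Ht. destruct (K_decomp k N c K HU m (g t) (GK t Ht)) as [w [z [Hw [Hz Ez]]]].
    exists w. split; auto. exists z. auto. }
  rewrite G0, G1 in Hch.
  assert (Hlen : (length l <= 16)%nat).
  { apply (count16 k N c K HU m x l Hnd). intros w Hw. split. apply Hinc; auto.
    destruct (Hmeet w Hw) as [t [Ht Hct]]. exists (g t). split; auto.
    rewrite dist2_sym. rewrite <- G0. pose proof (len_chord g L t HL Ht). lra. }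
  destruct (transfer m l x y Hch) with (e := e) as [eps [n0 [Heps H]]]; auto.
  { intros w Hw. apply Hinc in Hw. apply allwords_spec in Hw. tauto. }
  destruct (Cx eps Heps) as [M1 HM1]. destruct (Cy eps Heps) as [M2 HM2].
  exists (max n0 (max M1 M2)). intros n Hn.
  eapply Rle_trans. apply (H n ltac:(lia)); auto. apply HM1; lia. apply HM2; lia.
  assert (0 <= rw k m * D0 + 2 * e) by (pose proof (rw_pos k m Hk1); assert (0 <= rw k m * D0) by (apply Rmult_le_pos; lra); lra).
  apply Rmult_le_compat_r; auto. replace 16 with (INR 16) by (simpl; lra). apply le_INR. auto.
Qed.

End Main.

Lemma limsup_ev (u : nat -> R) (B : R) : (exists n0, forall n, (n0 <= n)%nat -> u n <= B) ->
  Rbar_le (LimSup_seq u) (Finite B).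
Proof.
  intros [n0 H]. rewrite <- (LimSup_seq_const B). apply LimSup_le. exists n0. auto.
Qed.

Lemma rbar_le_eps (X : Rbar) (B : R) : (forall e, 0 < e -> Rbar_le X (Finite (B + e))) -> Rbar_le X (Finite B).
Proof.
  intros H. destruct X as [x| |]; simpl in *.
  - apply Rnot_lt_le. intros Hlt. specialize (H ((x - B)/2) ltac:(lra)). lra.
  - apply (H 1 Rlt_0_1).
  - auto.
Qed.

Lemma find_level k L : (2 <= k)%nat -> 0 < L -> L <= 1 -> exists m, rw k (S m) < L /\ L <= rw k m.
Proof.
  intros Hk HL HL1. destruct (rw_small k L Hk HL) as [M HM].
  induction M. unfold rw in HM; simpl in HM. lra.
  destruct (Rlt_dec (rw k M) L) as [Hl|Hl]. apply IHM; auto. exists M. split; auto. lra.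
Qed.

Theorem lemma7p6 :
  forall (k N : nat) (c : nat -> pt) (K : pt -> Prop),
    is_USC k N c K ->
    exists C : R, 0 < C /\
      forall (cn : nat -> nat -> pt) (Kn : nat -> pt -> Prop),
        (forall n, is_USC k N (cn n) (Kn n)) ->
        (forall i, (i < N)%nat -> forall z : pt,
            pt_conv (fun n => Psi k (cn n i) z) (Psi k (c i) z)) ->
        hausdorff_conv Kn K ->
        geodist_equicont Kn ->
        forall (x y : pt) (xn yn : nat -> pt),
          K x -> K y ->
          (forall n, Kn n (xn n)) -> (forall n, Kn n (yn n)) ->
          pt_conv xn x -> pt_conv yn y ->
          Rbar_le (LimSup_seq (fun n => real (geodist (Kn n) (xn n) (yn n))))
                  (Rbar_mult (Finite C) (geodist K x y)).
Proof.
  intros k N c K HU.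
  pose proof (U_INRk k N c K HU) as Hk3. pose proof (U_k1 k N c K HU) as Hk1. pose proof (U_k k N c K HU) as Hk.
  destruct (D0_bound k N c K HU) as [D0 [HD0 HDall]].
  exists (16 * INR k * D0). split.
  { apply Rmult_lt_0_compat; auto. lra. }
  intros cn Kn HUn Hconv Hhaus Hequi x y xn yn Hx Hy Hxn Hyn Cx Cy.
  assert (HG : Good k N c K cn Kn) by (split; auto).
  destruct (HDall cn Kn HG) as [nD HD].
  set (u := fun n => real (geodist (Kn n) (xn n) (yn n))).
  assert (HB : forall g L, curve_in K x y g -> curve_length g = Finite L ->
             Rbar_le (LimSup_seq u) (Finite (16 * INR k * D0 * L))).
  { intros g L Hc HL.
    assert (HL0 : 0 <= L) by (eapply len_nonneg; eauto).
    assert (Hlim1 : Rbar_le (LimSup_seq u) (Finite D0)).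
    { apply limsup_ev. exists nD. intros n Hn. apply HD; auto. }
    assert (Hlev : forall m, L <= rw k m -> Rbar_le (LimSup_seq u) (Finite (16 * rw k m * D0))).
    { intros m Hm. apply rbar_le_eps. intros e He. apply limsup_ev.
      destruct (main_est k N c K HU cn Kn HG D0 nD HD0 HD x y g L m Hx Hy Hc HL Hm xn yn Hxn Hyn Cx Cy (e / 32) ltac:(lra)) as [n0 Hn0].
      exists n0. intros n Hn. specialize (Hn0 n Hn). unfold u. unfold dn in Hn0. lra. }
    destruct (Rlt_le_dec 1 L) as [HL1|HL1].
    - eapply Rbar_le_trans. exact Hlim1. simpl.
      assert (1 <= 16 * INR k * L).
      { assert (3 * 1 <= INR k * L) by (apply Rmult_le_compat; lra). lra. }
      replace (16 * INR k * D0 * L) with (D0 * (16 * INR k * L)) by ring.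
      rewrite <- (Rmult_1_r D0) at 1. apply Rmult_le_compat_l; lra.
    - destruct (Req_dec L 0) as [HLz|HLz].
      + subst L. rewrite Rmult_0_r. apply rbar_le_eps. intros e He.
        destruct (rw_small k (e / (16 * D0))) as [m Hm]. lia. apply Rdiv_lt_0_compat; lra.
        eapply Rbar_le_trans. apply (Hlev m). left; apply rw_pos; auto. simpl.
        apply (Rmult_lt_compat_r (16 * D0)) in Hm; [|lra]. unfold Rdiv in Hm.
        rewrite Rmult_assoc, Rinv_l, Rmult_1_r in Hm by lra. lra.
      + destruct (find_level k L ltac:(lia) ltac:(lra) HL1) as [m [Hm1 Hm2]].
        eapply Rbar_le_trans. apply (Hlev m Hm2). simpl.
        rewrite rw_S in Hm1.
        assert (rw k m < INR k * L).
        { apply (Rmult_lt_compat_r (INR k)) in Hm1; [|lra]. unfold Rdiv in Hm1.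
          rewrite Rmult_assoc, Rinv_l, Rmult_1_r in Hm1 by lra. lra. }
        replace (16 * INR k * D0 * L) with (16 * D0 * (INR k * L)) by ring.
        replace (16 * rw k m * D0) with (16 * D0 * rw k m) by ring.
        apply Rmult_le_compat_l; lra. }
  fold u.
  destruct (geodist K x y) as [g0| |] eqn:EG.
  - simpl. apply rbar_le_eps. intros e He.
    destruct (geo_approx K x y g0 (e / (16 * INR k * D0)) EG) as [g [L [Hc [HL HLt]]]].
    { apply Rdiv_lt_0_compat; auto. apply Rmult_lt_0_compat; lra. }
    eapply Rbar_le_trans. apply (HB g L Hc HL). simpl.
    assert (16 * INR k * D0 * L <= 16 * INR k * D0 * (g0 + e / (16 * INR k * D0))).
    { apply Rmult_le_compat_l. assert (0 < 16 * INR k * D0) by (apply Rmult_lt_0_compat; lra). lra. lra. }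
    replace (16 * INR k * D0 * (g0 + e / (16 * INR k * D0))) with (16 * INR k * D0 * g0 + e) in H.
    lra. field. split; lra.
  - assert (Hp : Rbar_mult (Finite (16 * INR k * D0)) p_infty = p_infty).
    { unfold Rbar_mult, Rbar_mult'. destruct (Rle_dec 0 (16 * INR k * D0)) as [H0|H0].
      destruct (Rle_lt_or_eq_dec 0 (16 * INR k * D0) H0) as [H1|H1]; auto.
      exfalso. assert (0 < 16 * INR k * D0) by (apply Rmult_lt_0_compat; lra). lra.
      exfalso. apply H0. assert (0 < 16 * INR k * D0) by (apply Rmult_lt_0_compat; lra). lra. }
    rewrite Hp. destruct (LimSup_seq u); simpl; auto.
  - exfalso. pose proof (geo_nonneg K x y). rewrite EG in H. simpl in H. auto.
Qed.
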